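(* Let $L$ be a rotational virtual link diagram. Then $L$ bounds a rotational virtual surface if and only if $L$ has an even number of virtual crossings.
   Context: A virtual link diagram is a diagram in the plane with classical crossings (over/under) and virtual crossings (drawn encircled). Rotational virtual equivalence is the equivalence relation on such diagrams generated by planar isotopy, the classical Reidemeister moves, and the virtual moves (virtual second and third Reidemeister moves, and the mixed move in which a strand with two virtual crossings passes over or under a classical crossing), but NOT the virtual first Reidemeister move (a virtual curl may not be added or removed); equivalently the detour move is restricted so that arcs with only virtual crossings are moved by regular homotopy in the plane (so, e.g., two opposite virtual curls can be created or cancelled via the Whitney trick, but a single one cannot). A free circle is a closed curve with no crossings (in particular no virtual crossings). Rotational virtual cobordism is the equivalence generated by rotational virtual equivalence, births (introducing an isolated free circle), deaths (removing an isolated free circle) and oriented saddle moves (bringing two oppositely oriented arcs together and resmoothing them into two new oppositely oriented arcs). $L$ bounds a rotational virtual surface if there is a sequence of such moves starting at $L$ and ending at the empty diagram. *)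

(* Defs.v *)
(* Combinatorial model of virtual link diagrams in
   the plane: a diagram is a Morse-position word of elementary horizontal
   slices (cups, caps, classical crossings, virtual crossings), read bottom
   to top.  Planar isotopy is generated by the standard (Turaev-style)
   relations: far commutativity of slices, zigzag cancellation, and rotation
   of crossings by cups/caps. *)
From Stdlib Require Import Relations.
From mathcomp Require Import all_boot.

Set Implicit Arguments.
Unset Strict Implicit.
Unset Printing Implicit Defensive.

(* A point on a horizontal level carries an orientation:
   true = the strand crosses the level going upward, false = downward. *)

(* Cr k o1 o2 : classical crossing; input orientations [o1; o2], output
             [o2; o1]; the strand going bottom-left -> top-right (orientation
             o1) passes over iff k. *)
Inductive gen : Type :=
| Cup of bool
| Cap of bool
| Cr of bool & bool & bool
| VCr of bool & bool.

Definition gin (g : gen) : seq bool :=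
  match g with
  | Cup _ => [::]
  | Cap b => [:: b; ~~ b]
  | Cr _ o1 o2 => [:: o1; o2]
  | VCr o1 o2 => [:: o1; o2]
  end.

Definition gout (g : gen) : seq bool :=
  match g with
  | Cup b => [:: b; ~~ b]
  | Cap _ => [::]
  | Cr _ o1 o2 => [:: o2; o1]
  | VCr o1 o2 => [:: o2; o1]
  end.

(* a slice: generator acting at horizontal position i (leftmost point used) *)
Definition slice := (gen * nat)%type.

Definition apply_slice (w : seq bool) (s : slice) : option (seq bool) :=
  let: (g, i) := s in
  if (i + size (gin g) <= size w) && (take (size (gin g)) (drop i w) == gin g)
  then Some (take i w ++ gout g ++ drop (i + size (gin g)) w)
  else None.

Fixpoint run (w : seq bool) (d : seq slice) : option (seq bool) :=
  match d with
  | [::] => Some w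
  | s :: d' => if apply_slice w s is Some w' then run w' d' else None
  end.

Definition diagram := seq slice.
Definition valid (d : diagram) : Prop := run [::] d = Some [::].

Definition is_virtual (s : slice) : bool :=
  if s.1 is VCr _ _ then true else false.
Definition count_virtual (d : diagram) : nat := count is_virtual d.

Definition shift (k : nat) (u : diagram) : diagram :=
  [seq (s.1, s.2 + k) | s <- u].

Inductive isotopy_rule : diagram -> diagram -> Prop :=
| IR_interchange g h i j : i + size (gout g) <= j ->
    isotopy_rule [:: (g, i); (h, j)]
                 [:: (h, j + size (gin g) - size (gout g)); (g, i)]
| IR_zigzag_l b : isotopy_rule [:: (Cup b, 1); (Cap (~~ b), 0)] [::]
| IR_zigzag_r b : isotopy_rule [:: (Cup b, 0); (Cap (~~ b), 1)] [::]
| IR_rot_cr_l k a b :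
    isotopy_rule [:: (Cup b, 2); (Cr k a b, 1); (Cap (~~ b), 0)]
                 [:: (Cr (~~ k) (~~ b) a, 0)]
| IR_rot_cr_r k a b :
    isotopy_rule [:: (Cup b, 0); (Cr k (~~ b) a, 1); (Cap (~~ b), 2)]
                 [:: (Cr (~~ k) a b, 0)]
| IR_rot_vcr_l a b :
    isotopy_rule [:: (Cup b, 2); (VCr a b, 1); (Cap (~~ b), 0)]
                 [:: (VCr (~~ b) a, 0)]
| IR_rot_vcr_r a b :
    isotopy_rule [:: (Cup b, 0); (VCr (~~ b) a, 1); (Cap (~~ b), 2)]
                 [:: (VCr a b, 0)].

Inductive xkind : Type := Classical of bool | Virtual.

Definition mkX (t : xkind) (o1 o2 : bool) : gen :=
  match t with Classical k => Cr k o1 o2 | Virtual => VCr o1 o2 end.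

(* t1 : crossing of A,B ; t2 : crossing of A,C ; t3 : crossing of B,C.
   Allowed: classical R3 (over/under induced by heights of the strands),
   virtual R3, and the mixed move (exactly one classical crossing). *)
Definition tri_ok (t1 t2 t3 : xkind) : Prop :=
  match t1, t2, t3 with
  | Classical k1, Classical k2, Classical k3 =>
      exists hA hB hC : nat,
        [/\ uniq [:: hA; hB; hC],
            k1 = (hB < hA), k2 = (hC < hA) & k3 = (hC < hB)]
  | Virtual, Virtual, Virtual => True
  | Classical _, Virtual, Virtual => True
  | Virtual, Classical _, Virtual => True
  | Virtual, Virtual, Classical _ => True
  | _, _, _ => False
  end.

(* ---- Reidemeister moves and virtual moves (no virtual R1) ---- *)
Inductive rv_rule : diagram -> diagram -> Prop :=
| RV_iso u v : isotopy_rule u v -> rv_rule u v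
| RV_R1_r k x : rv_rule [:: (Cup x, 1); (Cr k x x, 0); (Cap x, 1)] [::]
| RV_R1_l k x : rv_rule [:: (Cup (~~ x), 0); (Cr k x x, 1); (Cap (~~ x), 0)] [::]
| RV_R2 k a b : rv_rule [:: (Cr k a b, 0); (Cr (~~ k) b a, 0)] [::]
| RV_vR2 a b : rv_rule [:: (VCr a b, 0); (VCr b a, 0)] [::]
| RV_tri t1 t2 t3 a b c : tri_ok t1 t2 t3 ->
    rv_rule [:: (mkX t1 a b, 0); (mkX t2 a c, 1); (mkX t3 b c, 0)]
            [:: (mkX t3 b c, 1); (mkX t2 a c, 0); (mkX t1 a b, 1)].

Inductive cob_rule : diagram -> diagram -> Prop :=
| CB_rv u v : rv_rule u v -> cob_rule u v
| CB_birth b : cob_rule [::] [:: (Cup b, 0); (Cap b, 0)]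
| CB_saddle b : cob_rule [::] [:: (Cap b, 0); (Cup b, 0)].

Definition step (R : diagram -> diagram -> Prop) (d d' : diagram) : Prop :=
  valid d /\ valid d' /\
  exists (p s u v : diagram) (k : nat),
    R u v /\ d = p ++ shift k u ++ s /\ d' = p ++ shift k v ++ s.

Definition rv_equiv (d d' : diagram) : Prop :=
  clos_refl_sym_trans diagram (step rv_rule) d d'.

Definition rv_cobordant (d d' : diagram) : Prop :=
  clos_refl_sym_trans diagram (step cob_rule) d d'.

Definition bounds_rv_surface (L : diagram) : Prop := rv_cobordant L [::].

(* Main.v *)
Require Import Defs.
From mathcomp Require Import all_boot.
From Stdlib Require Import Relations.
From mathcomp Require Import zify.
Set Implicit Arguments.
Unset Strict Implicit.
Unset Printing Implicit Defensive.


Lemma apply_sliceP w g i w' :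
  apply_slice w (g, i) = Some w' <->
  exists x y, [/\ size x = i, w = x ++ gin g ++ y & w' = x ++ gout g ++ y].
Proof.
rewrite /apply_slice; split.
  case: ifP => // /andP [Hs /eqP Ht] [<-].
  exists (take i w), (drop (i + size (gin g)) w); split.
  - by rewrite size_take; case: ltnP => //; lia.
  - rewrite -[in LHS](cat_take_drop i w) -[drop i w](cat_take_drop (size (gin g))) Ht drop_drop addnC.
    done.
  - done.
case=> x [y [Hx -> ->]].
rewrite !size_cat -Hx leq_add2l leq_addr /=.
rewrite drop_size_cat // take_size_cat // eqxx /=.
by rewrite take_size_cat // addnC -drop_drop drop_size_cat // drop_size_cat.
Qed.

Lemma catI (s a b : seq bool) : s ++ a = s ++ b -> a = b.
Proof. by elim: s => //= x s IH [] /IH. Qed.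

Lemma list_split (a b c d : seq bool) :
  a ++ b = c ++ d -> size a <= size c -> exists u, c = a ++ u /\ b = u ++ d.
Proof.
move=> E H; exists (drop (size a) c).
have Hc : c = a ++ drop (size a) c.
  have := congr1 (take (size a)) E.
  rewrite take_size_cat // take_cat ltn_neqAle H andbT.
  case: eqP => [Ea|_ Ha]; last by rewrite {1}Ha cat_take_drop.
  by rewrite Ea subnn take0 cats0 => ->; rewrite drop_size cats0.
split => //.
by apply: (@catI a); rewrite E {1}Hc catA.
Qed.

Lemma run_cons w s u :
  run w (s :: u) = if apply_slice w s is Some w' then run w' u else None.
Proof. by []. Qed.

Lemma shift_cons k g n u : shift k ((g, n) :: u) = (g, n + k) :: shift k u.
Proof. by []. Qed.

Lemma run_cat w a b :
  run w (a ++ b) = if run w a is Some w' then run w' b else None.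
Proof.
elim: a w => //= s a IH w.
by case: (apply_slice w s).
Qed.

Lemma shift_cat k a b : shift k (a ++ b) = shift k a ++ shift k b.
Proof. exact: map_cat. Qed.

Lemma shift_shift k j u : shift k (shift j u) = shift (j + k) u.
Proof. by rewrite /shift -map_comp; apply: eq_map => -[g i] /=; rewrite addnA. Qed.

Lemma shift0 u : shift 0 u = u.
Proof. by rewrite /shift; elim: u => //= -[g i] u ->; rewrite addn0. Qed.

Lemma size_shift k u : size (shift k u) = size u.
Proof. exact: size_map. Qed.

Lemma apply_slice_shift x y g n :
  apply_slice (x ++ y) (g, n + size x) = omap (cat x) (apply_slice y (g, n)).
Proof.
case E: (apply_slice y (g, n)) => [y'|] /=.
  move/apply_sliceP: E => [x1 [y1 [H1 -> ->]]].
  apply/apply_sliceP; exists (x ++ x1), y1; split.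
  - by rewrite size_cat H1 addnC.
  - by rewrite catA.
  - by rewrite catA.
case E2: (apply_slice (x ++ y) (g, n + size x)) => [z|] //.
move/apply_sliceP: E2 => [x1 [y1 [H1 Hxy _]]].
have [u [Hu1 Hu2]] := list_split Hxy (leq_trans (leq_addl _ _) (eq_leq (esym H1))).
suff : apply_slice y (g, n) = Some (u ++ gout g ++ y1) by rewrite E.
apply/apply_sliceP; exists u, y1; split => //.
by move: H1; rewrite Hu1 size_cat; lia.
Qed.

Lemma run_shift x y u :
  run (x ++ y) (shift (size x) u) = omap (cat x) (run y u).
Proof.
elim: u y => [|[g n] u IH] y //.
rewrite shift_cons !run_cons apply_slice_shift.
by case: (apply_slice y (g, n)).
Qed.

Lemma apply_slice_catr w z s w' :
  apply_slice w s = Some w' -> apply_slice (w ++ z) s = Some (w' ++ z).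
Proof.
case: s => g i /apply_sliceP [x [y [H -> ->]]].
by apply/apply_sliceP; exists x, (y ++ z); rewrite !catA.
Qed.

Lemma run_catr w z u w' : run w u = Some w' -> run (w ++ z) u = Some (w' ++ z).
Proof.
elim: u w => [|s u IH] w; first by case=> ->.
rewrite !run_cons; case E: (apply_slice w s) => [w1|] // H.
by rewrite (apply_slice_catr z E); apply: IH.
Qed.

Lemma run_closed z x : run [::] x = Some [::] -> run z x = Some z.
Proof. by move/(run_catr z). Qed.

Lemma run_shift_size w k x w' :
  run w (shift k x) = Some w' -> x <> [::] -> k <= size w.
Proof.
case: x => // -[g n] x; rewrite shift_cons run_cons.
case E: (apply_slice w (g, n + k)) => [w1|] // _ _.
move/apply_sliceP: E => [x1 [y1 [H1 -> _]]].
by rewrite !size_cat H1; lia.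
Qed.

Lemma run_shiftP w k u w' : k <= size w ->
  run w (shift k u) = Some w' <->
  exists z, run (drop k w) u = Some z /\ w' = take k w ++ z.
Proof.
move=> Hk.
have Hs : size (take k w) = k by rewrite size_take; case: ltnP => //; lia.
have := run_shift (take k w) (drop k w) u; rewrite Hs cat_take_drop => ->.
case: (run (drop k w) u) => [z|] /=; split.
- by case=> <-; exists z.
- by case=> z' [[<-] ->].
- by [].
- by case=> z' [].
Qed.

Notation cob := rv_cobordant.

Lemma cob_refl d : cob d d. Proof. exact: rst_refl. Qed.
Lemma cob_sym d e : cob d e -> cob e d. Proof. exact: rst_sym. Qed.
Lemma cob_trans d e f : cob d e -> cob e f -> cob d f.
Proof. exact: rst_trans. Qed.

Lemma cob_valid d e : cob d e -> (valid d <-> valid e).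
Proof.
elim=> {d e} [d e [Hd [He _]]|d|d e _ IH|d e f _ IH1 _ IH2].
- by split.
- by [].
- by rewrite IH.
- by rewrite IH1 IH2.
Qed.

Lemma count_virtual_cat a b :
  count_virtual (a ++ b) = count_virtual a + count_virtual b.
Proof. exact: count_cat. Qed.

Lemma count_virtual_shift k u : count_virtual (shift k u) = count_virtual u.
Proof. by rewrite /count_virtual /shift count_map; apply: eq_count => -[]. Qed.

Lemma rule_parity u v : cob_rule u v ->
  odd (count_virtual u) = odd (count_virtual v).
Proof.
case=> [{}u {}v [{}u {}v [g h i j _|b|b|k a b|k a b|a b|a b]|k x|k x|k a b|a b|t1 t2 t3 a b c _]|b|b] //.
- by case: g; case: h.
- by case: t1; case: t2; case: t3.
Qed.

Lemma cob_parity d e : cob d e ->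
  odd (count_virtual d) = odd (count_virtual e).
Proof.
elim=> {d e} [d e [_ [_ [p [s [u [v [k [R [-> ->]]]]]]]]]|d|d e _ IH|d e f _ IH1 _ IH2].
- by rewrite !count_virtual_cat !count_virtual_shift !oddD (rule_parity R).
- by [].
- by [].
- by rewrite IH1 IH2.
Qed.

Lemma cob_step_f u v p s k : cob_rule u v ->
  valid (p ++ shift k u ++ s) -> valid (p ++ shift k v ++ s) ->
  cob (p ++ shift k u ++ s) (p ++ shift k v ++ s).
Proof.
move=> R H1 H2; apply: rst_step; split => //; split => //.
by exists p, s, u, v, k.
Qed.

Lemma cob_step_b u v p s k : cob_rule v u ->
  valid (p ++ shift k u ++ s) -> valid (p ++ shift k v ++ s) ->
  cob (p ++ shift k u ++ s) (p ++ shift k v ++ s).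
Proof. by move=> R H1 H2; apply: cob_sym; apply: cob_step_f. Qed.

Definition compat (x y : diagram) :=
  forall z z', run z x = Some z' -> run z y = Some z'.

Definition LE (x y : diagram) :=
  compat x y /\
  forall p s k w, run [::] p = Some w -> k <= size w ->
    valid (p ++ shift k x ++ s) -> cob (p ++ shift k x ++ s) (p ++ shift k y ++ s).

Lemma compat_shift x y k w w' : compat x y -> k <= size w ->
  run w (shift k x) = Some w' -> run w (shift k y) = Some w'.
Proof.
move=> C Hk /(@run_shiftP w k x w' Hk) [z [Hz ->]].
by apply/(@run_shiftP w k y _ Hk); exists z; split => //; apply: C.
Qed.

Lemma validE p x s :
  valid (p ++ x ++ s) <->
  exists w w', [/\ run [::] p = Some w, run w x = Some w' & run w' s = Some [::]].
Proof.
rewrite /valid; split.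
  rewrite run_cat; case E1: (run [::] p) => [w|] //.
  rewrite run_cat; case E2: (run w x) => [w'|] // H.
  by exists w, w'.
by case=> w [w' [H1 H2 H3]]; rewrite run_cat H1 run_cat H2.
Qed.

Lemma valid_transfer x y p s k w : compat x y -> run [::] p = Some w ->
  k <= size w -> valid (p ++ shift k x ++ s) -> valid (p ++ shift k y ++ s).
Proof.
move=> C Hp Hk /validE [w1 [w2 [H1 H2 H3]]].
move: H1; rewrite Hp => -[?]; subst w1.
by apply/validE; exists w, w2; split => //; apply: compat_shift H2.
Qed.

Lemma compat_refl x : compat x x. Proof. by []. Qed.
Lemma compat_trans x y z : compat x y -> compat y z -> compat x z.
Proof. by move=> C1 C2 a b /C1 /C2. Qed.

Lemma LE_refl x : LE x x.
Proof. by split => // *; apply: cob_refl. Qed.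

Lemma LE_trans x y z : LE x y -> LE y z -> LE x z.
Proof.
move=> [C1 H1] [C2 H2]; split; first exact: compat_trans C2.
move=> p s k w Hp Hk Hv; apply: cob_trans (H1 _ _ _ _ Hp Hk Hv) _.
by apply: (H2 _ _ _ w Hp Hk); apply: (valid_transfer C1 Hp Hk Hv).
Qed.

Lemma ctx_eq p a b s k j u :
  p ++ shift k (a ++ shift j u ++ b) ++ s =
  (p ++ shift k a) ++ shift (j + k) u ++ (shift k b ++ s).
Proof. by rewrite !shift_cat shift_shift !catA. Qed.

Lemma LE_step_f a b j u v : cob_rule u v ->
  compat (a ++ shift j u ++ b) (a ++ shift j v ++ b) ->
  LE (a ++ shift j u ++ b) (a ++ shift j v ++ b).
Proof.
move=> R C; split => // p s k w Hp Hk Hv.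
have Hv' := valid_transfer C Hp Hk Hv.
move: Hv Hv'; rewrite !ctx_eq; exact: cob_step_f.
Qed.

Lemma LE_step_b a b j u v : cob_rule v u ->
  compat (a ++ shift j u ++ b) (a ++ shift j v ++ b) ->
  LE (a ++ shift j u ++ b) (a ++ shift j v ++ b).
Proof.
move=> R C; split => // p s k w Hp Hk Hv.
have Hv' := valid_transfer C Hp Hk Hv.
move: Hv Hv'; rewrite !ctx_eq; exact: cob_step_b.
Qed.

Lemma LE_use x y p s k : LE x y -> x <> [::] ->
  valid (p ++ shift k x ++ s) -> cob (p ++ shift k x ++ s) (p ++ shift k y ++ s).
Proof.
move=> [C H] Hx Hv; have := Hv; move/validE => [w [w' [Hp Hxx _]]].
by apply: (H _ _ _ w) => //; apply: run_shift_size Hxx Hx.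
Qed.

Lemma LE_ctx x y a b j : LE x y -> x <> [::] ->
  LE (a ++ shift j x ++ b) (a ++ shift j y ++ b).
Proof.
move=> [C H] Hx; split.
  move=> z z'; rewrite run_cat [run z (a ++ _)]run_cat.
  case: (run z a) => // z1; rewrite !run_cat.
  case E: (run z1 (shift j x)) => [z2|] // Hb.
  by rewrite (compat_shift C (run_shift_size E Hx) E).
move=> p s k w Hp Hk Hv; move: Hv; rewrite !ctx_eq => Hv.
by apply: LE_use => //; split.
Qed.

Lemma compat_closed x y : run [::] x = Some [::] -> run [::] y = Some [::] ->
  compat x y.
Proof.
move=> Hx Hy z z'; rewrite (run_closed z Hx) => -[<-].
exact: run_closed.
Qed.

Lemma run2 y s1 s2 z : run y [:: s1; s2] = Some z <->
  exists y1, apply_slice y s1 = Some y1 /\ apply_slice y1 s2 = Some z.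
Proof.
rewrite !run_cons; case: (apply_slice y s1) => [y1|]; split.
- rewrite run_cons; case E: (apply_slice y1 s2) => [z1|] // [<-].
  by exists y1.
- by case=> y2 [[<-]]; rewrite run_cons => ->.
- by [].
- by case=> y2 [].
Qed.

Lemma interchange_f g h i j y z : i + size (gout g) <= j ->
  run y [:: (g,i); (h,j)] = Some z ->
  run y [:: (h, j + size (gin g) - size (gout g)); (g,i)] = Some z.
Proof.
move=> Hij /run2 [y1 [/apply_sliceP [x1 [y2 [H1 -> ->]]]
                      /apply_sliceP [x2 [y3 [H2 E ->]]]]].
rewrite catA in E.
have Hs : size (x1 ++ gout g) <= size x2 by rewrite size_cat H1 H2.
have [u [Hx2 Hy2]] := list_split E Hs.
apply/run2; exists (x1 ++ gin g ++ u ++ gout h ++ y3); split; apply/apply_sliceP.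
- exists (x1 ++ gin g ++ u), y3; split.
  + by move: H2; rewrite Hx2 !size_cat H1; lia.
  + by rewrite Hy2 !catA.
  + by rewrite !catA.
- exists x1, (u ++ gout h ++ y3); split => //.
  by rewrite Hx2 !catA.
Qed.

Lemma interchange_b g h i j y z : i + size (gout g) <= j ->
  run y [:: (h, j + size (gin g) - size (gout g)); (g,i)] = Some z ->
  run y [:: (g,i); (h,j)] = Some z.
Proof.
move=> Hij /run2 [y1 [/apply_sliceP [x1 [y2 [H1 -> ->]]]
                      /apply_sliceP [x2 [y3 [H2 E ->]]]]].
have E' : (x2 ++ gin g) ++ y3 = x1 ++ gout h ++ y2 by rewrite -catA E.
have Hs : size (x2 ++ gin g) <= size x1 by rewrite size_cat H1 H2; lia.
have [u [Hx1 Hy3]] := list_split E' Hs.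
apply/run2; exists (x2 ++ gout g ++ u ++ gin h ++ y2); split; apply/apply_sliceP.
- exists x2, (u ++ gin h ++ y2); split => //.
  by rewrite Hx1 !catA.
- exists (x2 ++ gout g ++ u), y2; split.
  + by move: H1; rewrite Hx1 !size_cat H2; lia.
  + by rewrite !catA.
  + by rewrite Hy3 !catA.
Qed.

Lemma run_interchange g h i j y : i + size (gout g) <= j ->
  run y [:: (g,i); (h,j)] = run y [:: (h, j + size (gin g) - size (gout g)); (g,i)].
Proof.
move=> H.
case E1: (run y [:: (g,i); (h,j)]) => [z|].
  by rewrite (interchange_f H E1).
case E2: (run y [:: (h, j + size (gin g) - size (gout g)); (g,i)]) => [z|] //.
by rewrite (interchange_b H E2) in E1.
Qed.

Lemma LE_rule_f u v : cob_rule u v -> compat u v -> LE u v.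
Proof.
move=> R C; have := @LE_step_f [::] [::] 0 u v R.
by rewrite !shift0 !cats0 => H; apply: H.
Qed.

Lemma LE_rule_b u v : cob_rule v u -> compat u v -> LE u v.
Proof.
move=> R C; have := @LE_step_b [::] [::] 0 u v R.
by rewrite !shift0 !cats0 => H; apply: H.
Qed.

Lemma LE_int_f g h i j j' : i + size (gout g) <= j ->
  j' = j + size (gin g) - size (gout g) ->
  LE [:: (g,i); (h,j)] [:: (h,j'); (g,i)].
Proof.
move=> H ->; apply: LE_rule_f; first exact/CB_rv/RV_iso/IR_interchange.
by move=> z z'; rewrite (run_interchange h z H).
Qed.

Lemma LE_int_b g h i j j' : i + size (gout g) <= j ->
  j' = j + size (gin g) - size (gout g) ->
  LE [:: (h,j'); (g,i)] [:: (g,i); (h,j)].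
Proof.
move=> H ->; apply: LE_rule_b; first exact/CB_rv/RV_iso/IR_interchange.
by move=> z z'; rewrite (run_interchange h z H).
Qed.

Lemma cup_cap w b i w' :
  apply_slice w (Cup b, i) = Some w' <-> apply_slice w' (Cap b, i) = Some w.
Proof.
split => /apply_sliceP [x [y [H -> ->]]]; apply/apply_sliceP; by exists x, y.
Qed.

Lemma apply_slice_det w s w1 w2 :
  apply_slice w s = Some w1 -> apply_slice w s = Some w2 -> w1 = w2.
Proof. by move=> -> []. Qed.

Lemma LE_bc b : LE [:: (Cup b,0); (Cap b,0)] [::].
Proof.
apply: LE_rule_b; first by constructor.
move=> z z' /run2 [z1 [/cup_cap H1 H2]].
by rewrite (apply_slice_det H1 H2).
Qed.

Lemma LE_zzr b : LE [:: (Cup b,0); (Cap (~~ b),1)] [::].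
Proof.
apply: LE_rule_f; first by do 3 constructor.
move=> z z'; case: b; case: z => [|[] z] //=; rewrite ?take0 ?drop0 /=; by case=> ->.
Qed.

Lemma LE_zzl b : LE [:: (Cup b,1); (Cap (~~ b),0)] [::].
Proof.
apply: LE_rule_f; first by do 3 constructor.
move=> z z'; case: b; case: z => [|[] z] //=; rewrite ?take0 ?drop0 /= => //; by case=> ->.
Qed.

Lemma LE_use' x y p s k x' y' : LE x y -> x <> [::] -> x' = shift k x ->
  y' = shift k y -> valid (p ++ x' ++ s) -> cob (p ++ x' ++ s) (p ++ y' ++ s).
Proof. by move=> H Hx -> ->; apply: LE_use. Qed.

Arguments apply_slice : simpl never.

Definition is_cap (s : slice) : bool := if s.1 is Cap _ then true else false.
Definition cupof (s : slice) : slice := (if s.1 is Cap b then Cup b else s.1, s.2).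
Definition open (C : diagram) : diagram := rev (map cupof C).
Definition closure w C := all is_cap C /\ run w C = Some [::].

Lemma open_cons s C : open (s :: C) = open C ++ [:: cupof s].
Proof. by rewrite /open /= rev_cons cats1. Qed.

Lemma open_nil : open [::] = [::]. Proof. by []. Qed.

Lemma open_run C w w' : all is_cap C -> run w C = Some w' -> run w' (open C) = Some w.
Proof.
elim: C w => [|[g i] C IH] w /=; first by move=> _ [->].
case: g => // b HC.
rewrite ?run_cons; case E: (apply_slice w (Cap b, i)) => [w1|] // H.
rewrite open_cons run_cat (IH _ HC H) /= /cupof /=.
by move/cup_cap: E => ->.
Qed.

Lemma open_run_inv C u v : all is_cap C -> run u (open C) = Some v -> run v C = Some u.
Proof.
elim: C u v => [|[g i] C IH] u v /=; first by move=> _ [->].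
case: g => // b HC.
rewrite open_cons run_cat.
case E: (run u (open C)) => [w1|] //.
rewrite ?run_cons /cupof /=; case E2: (apply_slice w1 (Cup b, i)) => [w2|] // [<-].
by rewrite ?run_cons; move/cup_cap: E2 => ->; apply: IH.
Qed.

Lemma closure_size w C : closure w C -> size w = (size C).*2.
Proof.
elim: C w => [|[g i] C IH] w [Ha Hr]; first by case: Hr => ->.
case: g Ha Hr => // b /= Ha.
case E: (apply_slice w (Cap b, i)) => [w1|] // Hr.
move/apply_sliceP: E => [x [y [_ -> E]]].
have := IH w1 (conj Ha Hr); rewrite E !size_cat /= => H.
by rewrite -!mul2n in H *; lia.
Qed.

Lemma valid_open_closure C D : all is_cap C -> all is_cap D ->
  valid (open C ++ D) -> exists v, closure v C /\ closure v D.
Proof.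
move=> HC HD; rewrite -[open C ++ D]cat0s => /validE [w [v [H1 H2 H3]]].
case: H1 => ?; subst w; exists v; split; split => //.
exact: open_run_inv H2.
Qed.

Lemma closure_valid w C : closure w C -> valid (open C ++ C).
Proof.
move=> [HC HR]; rewrite /valid run_cat.
by rewrite (open_run HC HR).
Qed.

Definition bal (w : seq bool) := count_mem true w == count_mem false w.

Lemma gin_gout_count g :
  count_mem true (gin g) + count_mem false (gout g) =
  count_mem false (gin g) + count_mem true (gout g).
Proof. by case: g => [[]|[]|? [] []|[] []]. Qed.

Lemma bal_slice w s w' : apply_slice w s = Some w' -> bal w = bal w'.
Proof.
case: s => g i /apply_sliceP [x [y [_ -> ->]]].
rewrite /bal !count_cat.
have := gin_gout_count g.
move=> H1; by apply/idP/idP => /eqP H0; apply/eqP; lia.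
Qed.

Lemma bal_run w d w' : run w d = Some w' -> bal w = bal w'.
Proof.
elim: d w => [|s d IH] w; first by case=> ->.
rewrite run_cons; case E: (apply_slice w s) => [w1|] // /IH <-.
exact: bal_slice E.
Qed.

Lemma adj_pair a t : ~~ all (pred1 a) t ->
  exists x y b, a :: t = x ++ [:: b; ~~ b] ++ y.
Proof.
elim: t a => [|c t IH] a //=.
case: eqP => [->|Hca] /=.
  move=> /IH [x [y [b E]]]; exists (a :: x), y, b; by rewrite E.
move=> _; exists [::], t, a => /=.
by case: a c Hca => [] [].
Qed.

Lemma bal_closure n w : size w <= n -> bal w -> exists C, closure w C.
Proof.
elim: n w => [|n IH] w Hs Hb.
  by move: Hs; rewrite leqn0 => /nilP ->; exists [::].
case: w Hs Hb => [|a t] Hs Hb; first by exists [::].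
have : ~~ all (pred1 a) t.
  apply/negP => /all_pred1P Et.
  move: Hb; rewrite /bal Et /=.
  clear Hs IH Et; case: a => /=; rewrite !count_nseq /= ?mul1n ?mul0n => /eqP; lia.
move=> /adj_pair [x [y [b E]]].
have Ap : apply_slice (a :: t) (Cap b, size x) = Some (x ++ y).
  by rewrite E; apply/apply_sliceP; exists x, y.
have [||C [HC1 HC2]] := IH (x ++ y).
- by move: Hs; rewrite E !size_cat /=; lia.
- by rewrite -(bal_slice Ap).
exists ((Cap b, size x) :: C); split => //=.
by rewrite Ap.
Qed.

Lemma bal_nil : bal [::]. Proof. by []. Qed.

Lemma reach_closure p w : run [::] p = Some w -> exists C, closure w C.
Proof.
move=> H; apply: (@bal_closure (size w)) => //.
by rewrite -(bal_run H).
Qed.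

Lemma closure_bal w C : closure w C -> bal w.
Proof. by case=> _ /bal_run ->. Qed.

Lemma valid_cat a b : valid a -> valid b -> valid (a ++ b).
Proof. by rewrite /valid run_cat => ->. Qed.

Lemma cob_catr A A' B : cob A A' -> valid B -> cob (A ++ B) (A' ++ B).
Proof.
move=> H HB; elim: H => {A A'} [d e [Hd [He [p [s [u [v [k [R [? ?]]]]]]]]]|d|d e _ IH|d e f _ IH1 _ IH2].
- subst d e; have V1 : valid ((p ++ shift k u ++ s) ++ B) by apply: valid_cat.
  have V2 : valid ((p ++ shift k v ++ s) ++ B) by apply: valid_cat.
  rewrite -!catA in V1 V2 *; apply: rst_step; split => //; split => //.
  by exists p, (s ++ B), u, v, k.
- exact: cob_refl.
- exact: cob_sym.
- exact: cob_trans IH2.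
Qed.

Lemma cob_catl A B B' : cob B B' -> valid A -> cob (A ++ B) (A ++ B').
Proof.
move=> H HA; elim: H => {B B'} [d e [Hd [He [p [s [u [v [k [R [? ?]]]]]]]]]|d|d e _ IH|d e f _ IH1 _ IH2].
- subst d e; have V1 : valid (A ++ p ++ shift k u ++ s) by apply: valid_cat.
  have V2 : valid (A ++ p ++ shift k v ++ s) by apply: valid_cat.
  apply: rst_step; split => //; split => //.
  by exists (A ++ p), s, u, v, k; rewrite -!catA.
- exact: cob_refl.
- exact: cob_sym.
- exact: cob_trans IH2.
Qed.

Lemma cob_cat A A' B B' : cob A A' -> cob B B' -> valid A -> valid B ->
  cob (A ++ B) (A' ++ B').
Proof.
move=> H1 H2 HA HB; apply: cob_trans (cob_catr H1 HB) _.
by apply: cob_catl H2 _; rewrite -(cob_valid H1).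
Qed.



Lemma Sad C : forall p s w, run [::] p = Some w -> closure w C ->
  run w s = Some [::] -> cob (p ++ s) (p ++ C ++ open C ++ s).
Proof.
elim: C => [|[g i] C IH] p s w Hp [HC HR] Hs; first exact: cob_refl.
case: g HC HR => // b /= HC.
case E: (apply_slice w (Cap b, i)) => [w1|] // HR.
have E' : apply_slice w1 (Cup b, i) = Some w by apply/cup_cap.
have Hv : valid (p ++ s) by rewrite /valid run_cat Hp.
have Hv2 : valid (p ++ [:: (Cap b, i); (Cup b, i)] ++ s).
  by rewrite /valid run_cat Hp /= E /= E'.
apply: cob_trans.
  have := @cob_step_f [::] [:: (Cap b, 0); (Cup b, 0)] p s i (CB_saddle b).
  rewrite /shift /= !add0n; apply => //.
have := IH (p ++ [:: (Cap b, i)]) ((Cup b, i) :: s) w1.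
rewrite run_cat Hp /= E /= E' => /(_ erefl (conj HC HR) Hs).
by rewrite open_cons /cupof /= -!catA.
Qed.

Lemma OC C w : closure w C -> cob (open C ++ C) [::].
Proof.
elim: C w => [|[g i] C IH] w [HC HR]; first exact: cob_refl.
case: g HC HR => // b /= HC.
case E: (apply_slice w (Cap b, i)) => [w1|] // HR.
have Hv := closure_valid (conj HC HR).
apply: cob_trans (IH w1 (conj HC HR)).
rewrite open_cons /cupof /= -catA.
have Hv' : valid (open C ++ [:: (Cup b, i); (Cap b, i)] ++ C).
  have E' : apply_slice w1 (Cup b, i) = Some w by apply/cup_cap.
  by rewrite /valid run_cat (open_run HC HR) /= E' /= E.
by apply: (@LE_use' _ _ (open C) C i [:: (Cup b, i); (Cap b, i)] [::] (LE_bc b)) => //; rewrite /shift /= add0n.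
Qed.

Lemma closure_indep X w C C' : run [::] X = Some w -> closure w C -> closure w C' ->
  (forall w0 D D', closure w0 D -> closure w0 D' -> cob (open D ++ D') [::]) ->
  cob (X ++ C) (X ++ C').
Proof.
move=> HX HC HC' MD.
apply: cob_trans (Sad HX HC' (proj2 HC)) _.
rewrite catA; apply: cob_trans.
  apply: cob_catl; first exact: (MD _ _ _ HC' HC).
  by rewrite /valid run_cat HX; case: HC'.
by rewrite cats0; exact: cob_refl.
Qed.

Lemma cap_nth w b i w' : apply_slice w (Cap b, i) = Some w' ->
  nth false w i = b /\ nth false w i.+1 = ~~ b.
Proof.
move/apply_sliceP => [x [y [Hx -> _]]] /=.
rewrite !nth_cat Hx ltnn subnn ltnNge leqnSn /= subSnn.
by [].
Qed.

Lemma closure_cons w g i C : closure w ((g, i) :: C) ->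
  exists b w1, [/\ g = Cap b, apply_slice w (Cap b, i) = Some w1 & closure w1 C].
Proof.
case; case: g => // b /= HC.
case E: (apply_slice w (Cap b, i)) => [w1|] // HR.
by exists b, w1.
Qed.

Lemma closure_cat_valid C D w : closure w C -> closure w D -> valid (open C ++ D).
Proof. by move=> [HC HR] [_ HD]; rewrite /valid run_cat (open_run HC HR). Qed.

Lemma double_inj' a b : a.*2 = b.*2 -> a = b.
Proof. by rewrite -!mul2n; lia. Qed.

Lemma disjoint_step n w w1 b1 i1 D1 b2 i2 D2 i2' i1'' w12 :
  (forall w C1 C2, size C2 = n -> closure w C1 -> closure w C2 -> cob (open C1 ++ C2) [::]) ->
  (forall C D, all is_cap C -> all is_cap D -> size D = n ->
    valid (open C ++ D) -> cob (open C ++ D) [::]) ->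
  closure w1 D1 -> size D1 = n -> apply_slice w (Cap b1, i1) = Some w1 ->
  closure w ((Cap b2, i2) :: D2) -> size D2 = n ->
  apply_slice w1 (Cap b2, i2') = Some w12 ->
  LE [:: (Cup b2, i2'); (Cup b1, i1)] [:: (Cup b1, i1''); (Cup b2, i2)] ->
  cob (open D1 ++ [:: (Cup b1, i1), (Cap b2, i2) & D2]) [::].
Proof.
move=> IH fin HD1 HD1n E1 HC2 HD2n E12 HLE.
have Hw1 : run [::] (open D1) = Some w1 by apply: open_run (proj1 HD1) (proj2 HD1).
have E1' : apply_slice w1 (Cup b1, i1) = Some w by apply/cup_cap.
have Hb12 : bal w12 by rewrite -(bal_slice E12) (closure_bal HD1).
have [E1c HE1c] := bal_closure (leqnn _) Hb12.
have HE : closure w1 ((Cap b2, i2') :: E1c).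
  by case: HE1c => H1 H2; split => //=; rewrite E12.
have HEn : size ((Cap b2, i2') :: E1c) = n.
  by rewrite -HD1n; apply: double_inj'; rewrite -(closure_size HE) -(closure_size HD1).
have Hs : run w1 ((Cup b1, i1) :: (Cap b2, i2) :: D2) = Some [::].
  by rewrite run_cons E1'; case: HC2.
have S1 := Sad Hw1 HE Hs.
apply: (cob_trans S1).
rewrite catA.
have VE : valid (open ((Cap b2, i2') :: E1c) ++ (Cup b1, i1) :: (Cap b2, i2) :: D2).
  by rewrite /valid run_cat (open_run (proj1 HE) (proj2 HE)).
apply: (cob_trans (cob_catr (IH _ _ _ HEn HD1 HE) VE)).
rewrite cat0s open_cons /cupof /= -catA /=.
move: VE; rewrite open_cons /cupof /= -catA /= => VE.
have H1 := @LE_use' _ _ (open E1c) ((Cap b2, i2) :: D2) 0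
  [:: (Cup b2, i2'); (Cup b1, i1)] [:: (Cup b1, i1''); (Cup b2, i2)] HLE
  (fun e => match e with erefl => I end) (esym (shift0 _)) (esym (shift0 _)) VE.
apply: (cob_trans H1).
have V2' := proj1 (cob_valid H1) VE.
have V2 : valid ((open E1c ++ [:: (Cup b1, i1'')]) ++ [:: (Cup b2, i2); (Cap b2, i2)] ++ D2) by rewrite -catA.
have H2 := @LE_use' _ _ (open E1c ++ [:: (Cup b1, i1'')]) D2 i2
  [:: (Cup b2, i2); (Cap b2, i2)] [::] (LE_bc b2)
  (fun e => match e with erefl => I end) (erefl _) (erefl _) V2.
have -> : open E1c ++ [:: (Cup b1, i1''); (Cup b2, i2)] ++ (Cap b2, i2) :: D2 = (open E1c ++ [:: (Cup b1, i1'')]) ++ [:: (Cup b2, i2); (Cap b2, i2)] ++ D2 by rewrite -catA.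
apply: (cob_trans H2).
have V3 := proj1 (cob_valid H2) V2.
have -> : open E1c ++ [:: (Cup b1, i1'')] = open ((Cap b1, i1'') :: E1c) by rewrite open_cons.
apply: fin => //; first by case: HE1c.
  by case: HC2 => /= H _.
by move: V3; rewrite open_cons.
Qed.

Lemma meander n : forall w C1 C2, size C2 = n -> closure w C1 -> closure w C2 ->
  cob (open C1 ++ C2) [::].
Proof.
elim: n => [|n IH] w C1 C2 Hn HC1 HC2.
  move: Hn => /size0nil ?; subst C2.
  have := closure_size HC1; rewrite (closure_size HC2) /= -mul2n => H.
  have /size0nil ? : size C1 = 0 by move: H; rewrite -mul2n; lia.
  subst C1; exact: cob_refl.
have fin : forall C D, all is_cap C -> all is_cap D -> size D = n ->
    valid (open C ++ D) -> cob (open C ++ D) [::].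
  move=> C D HC HD HDn /(valid_open_closure HC HD) [v [Hv1 Hv2]].
  exact: IH Hv1 Hv2.
have V0 := closure_cat_valid HC1 HC2.
case: C2 Hn HC2 V0 => // -[g2 i2] D2 [HD2n] HC2 V0.
have [b2 [w2 [Eg2 E2 HD2]]] := closure_cons HC2; subst g2.
have Hs1 := closure_size HC1.
have Hs2 := closure_size HC2.
case: C1 HC1 Hs1 V0 => [|[g1 i1] D1] HC1 Hs1 V0; first by move: Hs1; rewrite Hs2.
have [b1 [w1 [Eg1 E1 HD1]]] := closure_cons HC1; subst g1.
have HD1n : size D1 = n by move: Hs1; rewrite Hs2 /= -!mul2n; lia.
have [N1 N1'] := cap_nth E1.
have [N2 N2'] := cap_nth E2.
have Hw1 : run [::] (open D1) = Some w1 by apply: open_run (proj1 HD1) (proj2 HD1).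
have E1' : apply_slice w1 (Cup b1, i1) = Some w by apply/cup_cap.
move: V0; rewrite open_cons /cupof /= -catA /= => V0.
have Hcap1 : all is_cap D1 by case: HD1.
have Hcap2 : all is_cap D2 by case: HD2.
case: (ltngtP i1 i2) => Hi.
-
  case: (ltngtP i2 i1.+1) => Hi'; first by lia.
  +
    move/apply_sliceP: (E1) => [x [y [Hx Ew Ew1]]].
    move/apply_sliceP: (E2) => [x2 [y2 [Hx2 Ew' _]]].
    have Eq : (x ++ [:: b1; ~~ b1]) ++ y = x2 ++ [:: b2; ~~ b2] ++ y2 by rewrite -catA -Ew.
    have Hsz : size (x ++ [:: b1; ~~ b1]) <= size x2 by rewrite size_cat Hx Hx2 /=; lia.
    have [u [Hu1 Hu2]] := list_split Eq Hsz.
    have E12 : apply_slice w1 (Cap b2, i2 - 2) = Some (x ++ u ++ y2).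
      apply/apply_sliceP; exists (x ++ u), y2; split.
      - by move: Hx2; rewrite Hu1 !size_cat Hx /=; lia.
      - by rewrite Ew1 Hu2 /= !catA.
      - by rewrite catA.
    apply: (disjoint_step IH fin HD1 HD1n E1 HC2 HD2n E12).
    by apply: LE_int_b => /=; [lia | rewrite addn0].
  +
    subst i2.
    have Eb : b2 = ~~ b1 by rewrite -N2 N1'.
    rewrite Eb in V0 *.
    have H := @LE_use' _ _ (open D1) D2 i1 [:: (Cup b1, i1); (Cap (~~ b1), i1.+1)] [::] (LE_zzr b1) (fun e => match e with erefl => I end) (erefl _) (erefl _) V0.
    apply: (cob_trans H (fin _ _ Hcap1 Hcap2 HD2n _)).
    by rewrite -(cob_valid H).
-
  case: (ltngtP i1 i2.+1) => Hi'; first by lia.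
  + move/apply_sliceP: (E1) => [x [y [Hx Ew Ew1]]].
    move/apply_sliceP: (E2) => [x2 [y2 [Hx2 Ew' _]]].
    have Eq : (x2 ++ [:: b2; ~~ b2]) ++ y2 = x ++ [:: b1; ~~ b1] ++ y by rewrite -catA -Ew'.
    have Hsz : size (x2 ++ [:: b2; ~~ b2]) <= size x by rewrite size_cat Hx Hx2 /=; lia.
    have [u [Hu1 Hu2]] := list_split Eq Hsz.
    have E12 : apply_slice w1 (Cap b2, i2) = Some (x2 ++ u ++ y).
      apply/apply_sliceP; exists x2, (u ++ y); split => //.
      by rewrite Ew1 Hu1 /= -!catA.
    apply: (disjoint_step IH fin HD1 HD1n E1 HC2 HD2n E12).
    by apply: LE_int_f => /=; [lia | rewrite addn0].
  + subst i1.
    have Eb : b2 = ~~ b1 by rewrite -N1 N2' negbK.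
    rewrite Eb in V0 *.
    have H := @LE_use' _ _ (open D1) D2 i2 [:: (Cup b1, i2.+1); (Cap (~~ b1), i2)] [::] (LE_zzl b1) (fun e => match e with erefl => I end) (erefl _) (erefl _) V0.
    apply: (cob_trans H (fin _ _ Hcap1 Hcap2 HD2n _)).
    by rewrite -(cob_valid H).
-
  subst i2.
  have Eb : b2 = b1 by rewrite -N2 N1.
  rewrite Eb in V0 *.
  have H := @LE_use' _ _ (open D1) D2 i1 [:: (Cup b1, i1); (Cap b1, i1)] [::] (LE_bc b1) (fun e => match e with erefl => I end) (erefl _) (erefl _) V0.
  apply: (cob_trans H (fin _ _ Hcap1 Hcap2 HD2n _)).
  by rewrite -(cob_valid H).
Qed.


Lemma LE_cf x y a b j u v : cob_rule u v -> run [::] x = Some [::] ->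
  run [::] y = Some [::] -> x = a ++ shift j u ++ b -> y = a ++ shift j v ++ b ->
  LE x y.
Proof.
move=> R Hx Hy Ex Ey; subst x y; apply: LE_step_f R _.
exact: compat_closed.
Qed.

Lemma LE_cb x y a b j u v : cob_rule v u -> run [::] x = Some [::] ->
  run [::] y = Some [::] -> x = a ++ shift j u ++ b -> y = a ++ shift j v ++ b ->
  LE x y.
Proof.
move=> R Hx Hy Ex Ey; subst x y; apply: LE_step_b R _.
exact: compat_closed.
Qed.
Lemma TC_tt : LE [:: ((Cup true), 0); ((Cr true true false), 0); ((Cap false), 0)] ([::] : diagram).
Proof.
apply: (LE_trans (@LE_cb [:: ((Cup true), 0); ((Cr true true false), 0); ((Cap false), 0)] [:: ((Cup true), 0); ((Cup false), 0); ((Cr false true true), 1); ((Cap true), 2); ((Cap false), 0)] [:: ((Cup true), 0)] [:: ((Cap false), 0)] 0 [:: ((Cr true true false), 0)] [:: ((Cup false), 0); ((Cr false true true), 1); ((Cap true), 2)] (CB_rv (RV_iso (IR_rot_cr_r false true false))) erefl erefl erefl erefl)).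
apply: (LE_trans (@LE_cb [:: ((Cup true), 0); ((Cup false), 0); ((Cr false true true), 1); ((Cap true), 2); ((Cap false), 0)] [:: ((Cup true), 0); ((Cup false), 0); ((Cr false true true), 1); ((Cap false), 0); ((Cap true), 0)] [:: ((Cup true), 0); ((Cup false), 0); ((Cr false true true), 1)] ([::] : diagram) 0 [:: ((Cap true), 2); ((Cap false), 0)] [:: ((Cap false), 0); ((Cap true), 0)] (CB_rv (RV_iso (@IR_interchange (Cap false) (Cap true) 0 0 erefl))) erefl erefl erefl erefl)).
apply: (LE_trans (@LE_cf [:: ((Cup true), 0); ((Cup false), 0); ((Cr false true true), 1); ((Cap false), 0); ((Cap true), 0)] [:: ((Cup true), 0); ((Cap true), 0)] [:: ((Cup true), 0)] [:: ((Cap true), 0)] 0 [:: ((Cup false), 0); ((Cr false true true), 1); ((Cap false), 0)] ([::] : diagram) (CB_rv (RV_R1_l false true)) erefl erefl erefl erefl)).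
exact: (@LE_cb [:: ((Cup true), 0); ((Cap true), 0)] ([::] : diagram) ([::] : diagram) ([::] : diagram) 0 [:: ((Cup true), 0); ((Cap true), 0)] ([::] : diagram) (CB_birth true) erefl erefl erefl erefl).
Qed.

Lemma TC_tf : LE [:: ((Cup true), 0); ((Cr false true false), 0); ((Cap false), 0)] ([::] : diagram).
Proof.
apply: (LE_trans (@LE_cb [:: ((Cup true), 0); ((Cr false true false), 0); ((Cap false), 0)] [:: ((Cup true), 0); ((Cup false), 0); ((Cr true true true), 1); ((Cap true), 2); ((Cap false), 0)] [:: ((Cup true), 0)] [:: ((Cap false), 0)] 0 [:: ((Cr false true false), 0)] [:: ((Cup false), 0); ((Cr true true true), 1); ((Cap true), 2)] (CB_rv (RV_iso (IR_rot_cr_r true true false))) erefl erefl erefl erefl)).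
apply: (LE_trans (@LE_cb [:: ((Cup true), 0); ((Cup false), 0); ((Cr true true true), 1); ((Cap true), 2); ((Cap false), 0)] [:: ((Cup true), 0); ((Cup false), 0); ((Cr true true true), 1); ((Cap false), 0); ((Cap true), 0)] [:: ((Cup true), 0); ((Cup false), 0); ((Cr true true true), 1)] ([::] : diagram) 0 [:: ((Cap true), 2); ((Cap false), 0)] [:: ((Cap false), 0); ((Cap true), 0)] (CB_rv (RV_iso (@IR_interchange (Cap false) (Cap true) 0 0 erefl))) erefl erefl erefl erefl)).
apply: (LE_trans (@LE_cf [:: ((Cup true), 0); ((Cup false), 0); ((Cr true true true), 1); ((Cap false), 0); ((Cap true), 0)] [:: ((Cup true), 0); ((Cap true), 0)] [:: ((Cup true), 0)] [:: ((Cap true), 0)] 0 [:: ((Cup false), 0); ((Cr true true true), 1); ((Cap false), 0)] ([::] : diagram) (CB_rv (RV_R1_l true true)) erefl erefl erefl erefl)).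
exact: (@LE_cb [:: ((Cup true), 0); ((Cap true), 0)] ([::] : diagram) ([::] : diagram) ([::] : diagram) 0 [:: ((Cup true), 0); ((Cap true), 0)] ([::] : diagram) (CB_birth true) erefl erefl erefl erefl).
Qed.

Lemma TC_ft : LE [:: ((Cup false), 0); ((Cr true false true), 0); ((Cap true), 0)] ([::] : diagram).
Proof.
apply: (LE_trans (@LE_cb [:: ((Cup false), 0); ((Cr true false true), 0); ((Cap true), 0)] [:: ((Cup false), 0); ((Cup true), 2); ((Cr false true true), 1); ((Cap false), 0); ((Cap true), 0)] [:: ((Cup false), 0)] [:: ((Cap true), 0)] 0 [:: ((Cr true false true), 0)] [:: ((Cup true), 2); ((Cr false true true), 1); ((Cap false), 0)] (CB_rv (RV_iso (IR_rot_cr_l false true true))) erefl erefl erefl erefl)).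
apply: (LE_trans (@LE_cf [:: ((Cup false), 0); ((Cup true), 2); ((Cr false true true), 1); ((Cap false), 0); ((Cap true), 0)] [:: ((Cup true), 0); ((Cup false), 0); ((Cr false true true), 1); ((Cap false), 0); ((Cap true), 0)] ([::] : diagram) [:: ((Cr false true true), 1); ((Cap false), 0); ((Cap true), 0)] 0 [:: ((Cup false), 0); ((Cup true), 2)] [:: ((Cup true), 0); ((Cup false), 0)] (CB_rv (RV_iso (@IR_interchange (Cup false) (Cup true) 0 2 erefl))) erefl erefl erefl erefl)).
apply: (LE_trans (@LE_cf [:: ((Cup true), 0); ((Cup false), 0); ((Cr false true true), 1); ((Cap false), 0); ((Cap true), 0)] [:: ((Cup true), 0); ((Cap true), 0)] [:: ((Cup true), 0)] [:: ((Cap true), 0)] 0 [:: ((Cup false), 0); ((Cr false true true), 1); ((Cap false), 0)] ([::] : diagram) (CB_rv (RV_R1_l false true)) erefl erefl erefl erefl)).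
exact: (@LE_cb [:: ((Cup true), 0); ((Cap true), 0)] ([::] : diagram) ([::] : diagram) ([::] : diagram) 0 [:: ((Cup true), 0); ((Cap true), 0)] ([::] : diagram) (CB_birth true) erefl erefl erefl erefl).
Qed.

Lemma TC_ff : LE [:: ((Cup false), 0); ((Cr false false true), 0); ((Cap true), 0)] ([::] : diagram).
Proof.
apply: (LE_trans (@LE_cb [:: ((Cup false), 0); ((Cr false false true), 0); ((Cap true), 0)] [:: ((Cup false), 0); ((Cup true), 2); ((Cr true true true), 1); ((Cap false), 0); ((Cap true), 0)] [:: ((Cup false), 0)] [:: ((Cap true), 0)] 0 [:: ((Cr false false true), 0)] [:: ((Cup true), 2); ((Cr true true true), 1); ((Cap false), 0)] (CB_rv (RV_iso (IR_rot_cr_l true true true))) erefl erefl erefl erefl)).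
apply: (LE_trans (@LE_cf [:: ((Cup false), 0); ((Cup true), 2); ((Cr true true true), 1); ((Cap false), 0); ((Cap true), 0)] [:: ((Cup true), 0); ((Cup false), 0); ((Cr true true true), 1); ((Cap false), 0); ((Cap true), 0)] ([::] : diagram) [:: ((Cr true true true), 1); ((Cap false), 0); ((Cap true), 0)] 0 [:: ((Cup false), 0); ((Cup true), 2)] [:: ((Cup true), 0); ((Cup false), 0)] (CB_rv (RV_iso (@IR_interchange (Cup false) (Cup true) 0 2 erefl))) erefl erefl erefl erefl)).
apply: (LE_trans (@LE_cf [:: ((Cup true), 0); ((Cup false), 0); ((Cr true true true), 1); ((Cap false), 0); ((Cap true), 0)] [:: ((Cup true), 0); ((Cap true), 0)] [:: ((Cup true), 0)] [:: ((Cap true), 0)] 0 [:: ((Cup false), 0); ((Cr true true true), 1); ((Cap false), 0)] ([::] : diagram) (CB_rv (RV_R1_l true true)) erefl erefl erefl erefl)).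
exact: (@LE_cb [:: ((Cup true), 0); ((Cap true), 0)] ([::] : diagram) ([::] : diagram) ([::] : diagram) 0 [:: ((Cup true), 0); ((Cap true), 0)] ([::] : diagram) (CB_birth true) erefl erefl erefl erefl).
Qed.

Lemma N_tt : LE [:: ((Cup true), 0); ((Cup true), 1); ((VCr true false), 1); ((Cap false), 1); ((Cap true), 0)] [:: ((Cup true), 0); ((VCr true false), 0); ((Cap false), 0)].
Proof.
apply: (LE_trans (@LE_cb [:: ((Cup true), 0); ((Cup true), 1); ((VCr true false), 1); ((Cap false), 1); ((Cap true), 0)] [:: ((Cup true), 0); ((Cup true), 1); ((VCr true true), 0); ((VCr true true), 0); ((VCr true false), 1); ((Cap false), 1); ((Cap true), 0)] [:: ((Cup true), 0); ((Cup true), 1)] [:: ((VCr true false), 1); ((Cap false), 1); ((Cap true), 0)] 0 ([::] : diagram) [:: ((VCr true true), 0); ((VCr true true), 0)] (CB_rv (RV_vR2 true true)) erefl erefl erefl erefl)).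
apply: (LE_trans (@LE_cb [:: ((Cup true), 0); ((Cup true), 1); ((VCr true true), 0); ((VCr true true), 0); ((VCr true false), 1); ((Cap false), 1); ((Cap true), 0)] [:: ((Cup true), 0); ((Cup true), 1); ((VCr true true), 0); ((Cup true), 0); ((Cap false), 1); ((VCr true true), 0); ((VCr true false), 1); ((Cap false), 1); ((Cap true), 0)] [:: ((Cup true), 0); ((Cup true), 1); ((VCr true true), 0)] [:: ((VCr true true), 0); ((VCr true false), 1); ((Cap false), 1); ((Cap true), 0)] 0 ([::] : diagram) [:: ((Cup true), 0); ((Cap false), 1)] (CB_rv (RV_iso (IR_zigzag_r true))) erefl erefl erefl erefl)).
apply: (LE_trans (@LE_cb [:: ((Cup true), 0); ((Cup true), 1); ((VCr true true), 0); ((Cup true), 0); ((Cap false), 1); ((VCr true true), 0); ((VCr true false), 1); ((Cap false), 1); ((Cap true), 0)] [:: ((Cup true), 0); ((Cup true), 1); ((Cup true), 0); ((VCr true true), 2); ((Cap false), 1); ((VCr true true), 0); ((VCr true false), 1); ((Cap false), 1); ((Cap true), 0)] [:: ((Cup true), 0); ((Cup true), 1)] [:: ((Cap false), 1); ((VCr true true), 0); ((VCr true false), 1); ((Cap false), 1); ((Cap true), 0)] 0 [:: ((VCr true true), 0); ((Cup true), 0)] [:: ((Cup true), 0); ((VCr true true), 2)] (CB_rv (RV_iso (@IR_interchange (Cup true) (VCr true true) 0 2 erefl))) erefl erefl erefl erefl)).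
apply: (LE_trans (@LE_cb [:: ((Cup true), 0); ((Cup true), 1); ((Cup true), 0); ((VCr true true), 2); ((Cap false), 1); ((VCr true true), 0); ((VCr true false), 1); ((Cap false), 1); ((Cap true), 0)] [:: ((Cup true), 0); ((Cup true), 0); ((Cup true), 3); ((VCr true true), 2); ((Cap false), 1); ((VCr true true), 0); ((VCr true false), 1); ((Cap false), 1); ((Cap true), 0)] [:: ((Cup true), 0)] [:: ((VCr true true), 2); ((Cap false), 1); ((VCr true true), 0); ((VCr true false), 1); ((Cap false), 1); ((Cap true), 0)] 0 [:: ((Cup true), 1); ((Cup true), 0)] [:: ((Cup true), 0); ((Cup true), 3)] (CB_rv (RV_iso (@IR_interchange (Cup true) (Cup true) 0 3 erefl))) erefl erefl erefl erefl)).
apply: (LE_trans (@LE_cf [:: ((Cup true), 0); ((Cup true), 0); ((Cup true), 3); ((VCr true true), 2); ((Cap false), 1); ((VCr true true), 0); ((VCr true false), 1); ((Cap false), 1); ((Cap true), 0)] [:: ((Cup true), 0); ((Cup true), 0); ((VCr false true), 1); ((VCr true true), 0); ((VCr true false), 1); ((Cap false), 1); ((Cap true), 0)] [:: ((Cup true), 0); ((Cup true), 0)] [:: ((VCr true true), 0); ((VCr true false), 1); ((Cap false), 1); ((Cap true), 0)] 1 [:: ((Cup true), 2); ((VCr true true), 1); ((Cap false), 0)] [:: ((VCr false true), 0)] (CB_rv (RV_iso (IR_rot_vcr_l true true))) erefl erefl erefl erefl)).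
apply: (LE_trans (@LE_cb [:: ((Cup true), 0); ((Cup true), 0); ((VCr false true), 1); ((VCr true true), 0); ((VCr true false), 1); ((Cap false), 1); ((Cap true), 0)] [:: ((Cup true), 0); ((Cup true), 0); ((VCr true false), 0); ((VCr true true), 1); ((VCr false true), 0); ((Cap false), 1); ((Cap true), 0)] [:: ((Cup true), 0); ((Cup true), 0)] [:: ((Cap false), 1); ((Cap true), 0)] 0 [:: ((VCr false true), 1); ((VCr true true), 0); ((VCr true false), 1)] [:: ((VCr true false), 0); ((VCr true true), 1); ((VCr false true), 0)] (CB_rv (@RV_tri Virtual Virtual Virtual true false true I)) erefl erefl erefl erefl)).
apply: (LE_trans (@LE_cb [:: ((Cup true), 0); ((Cup true), 0); ((VCr true false), 0); ((VCr true true), 1); ((VCr false true), 0); ((Cap false), 1); ((Cap true), 0)] [:: ((Cup true), 0); ((Cup true), 0); ((VCr true false), 0); ((VCr true true), 1); ((Cup true), 1); ((Cap false), 0); ((VCr false true), 0); ((Cap false), 1); ((Cap true), 0)] [:: ((Cup true), 0); ((Cup true), 0); ((VCr true false), 0); ((VCr true true), 1)] [:: ((VCr false true), 0); ((Cap false), 1); ((Cap true), 0)] 0 ([::] : diagram) [:: ((Cup true), 1); ((Cap false), 0)] (CB_rv (RV_iso (IR_zigzag_l true))) erefl erefl erefl erefl)).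
apply: (LE_trans (@LE_cb [:: ((Cup true), 0); ((Cup true), 0); ((VCr true false), 0); ((VCr true true), 1); ((Cup true), 1); ((Cap false), 0); ((VCr false true), 0); ((Cap false), 1); ((Cap true), 0)] [:: ((Cup true), 0); ((Cup true), 2); ((VCr true false), 0); ((VCr true true), 1); ((Cup true), 1); ((Cap false), 0); ((VCr false true), 0); ((Cap false), 1); ((Cap true), 0)] ([::] : diagram) [:: ((VCr true false), 0); ((VCr true true), 1); ((Cup true), 1); ((Cap false), 0); ((VCr false true), 0); ((Cap false), 1); ((Cap true), 0)] 0 [:: ((Cup true), 0); ((Cup true), 0)] [:: ((Cup true), 0); ((Cup true), 2)] (CB_rv (RV_iso (@IR_interchange (Cup true) (Cup true) 0 2 erefl))) erefl erefl erefl erefl)).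
apply: (LE_trans (@LE_cb [:: ((Cup true), 0); ((Cup true), 2); ((VCr true false), 0); ((VCr true true), 1); ((Cup true), 1); ((Cap false), 0); ((VCr false true), 0); ((Cap false), 1); ((Cap true), 0)] [:: ((Cup true), 0); ((VCr true false), 0); ((Cup true), 2); ((VCr true true), 1); ((Cup true), 1); ((Cap false), 0); ((VCr false true), 0); ((Cap false), 1); ((Cap true), 0)] [:: ((Cup true), 0)] [:: ((VCr true true), 1); ((Cup true), 1); ((Cap false), 0); ((VCr false true), 0); ((Cap false), 1); ((Cap true), 0)] 0 [:: ((Cup true), 2); ((VCr true false), 0)] [:: ((VCr true false), 0); ((Cup true), 2)] (CB_rv (RV_iso (@IR_interchange (VCr true false) (Cup true) 0 2 erefl))) erefl erefl erefl erefl)).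
apply: (LE_trans (@LE_cf [:: ((Cup true), 0); ((VCr true false), 0); ((Cup true), 2); ((VCr true true), 1); ((Cup true), 1); ((Cap false), 0); ((VCr false true), 0); ((Cap false), 1); ((Cap true), 0)] [:: ((Cup true), 0); ((VCr true false), 0); ((Cup true), 2); ((VCr true true), 1); ((Cup true), 1); ((VCr false true), 2); ((Cap false), 0); ((Cap false), 1); ((Cap true), 0)] [:: ((Cup true), 0); ((VCr true false), 0); ((Cup true), 2); ((VCr true true), 1); ((Cup true), 1)] [:: ((Cap false), 1); ((Cap true), 0)] 0 [:: ((Cap false), 0); ((VCr false true), 0)] [:: ((VCr false true), 2); ((Cap false), 0)] (CB_rv (RV_iso (@IR_interchange (Cap false) (VCr false true) 0 0 erefl))) erefl erefl erefl erefl)).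
apply: (LE_trans (@LE_cf [:: ((Cup true), 0); ((VCr true false), 0); ((Cup true), 2); ((VCr true true), 1); ((Cup true), 1); ((VCr false true), 2); ((Cap false), 0); ((Cap false), 1); ((Cap true), 0)] [:: ((Cup true), 0); ((VCr true false), 0); ((Cup true), 2); ((VCr true true), 1); ((Cup true), 1); ((VCr false true), 2); ((Cap false), 3); ((Cap false), 0); ((Cap true), 0)] [:: ((Cup true), 0); ((VCr true false), 0); ((Cup true), 2); ((VCr true true), 1); ((Cup true), 1); ((VCr false true), 2)] [:: ((Cap true), 0)] 0 [:: ((Cap false), 0); ((Cap false), 1)] [:: ((Cap false), 3); ((Cap false), 0)] (CB_rv (RV_iso (@IR_interchange (Cap false) (Cap false) 0 1 erefl))) erefl erefl erefl erefl)).
apply: (LE_trans (@LE_cf [:: ((Cup true), 0); ((VCr true false), 0); ((Cup true), 2); ((VCr true true), 1); ((Cup true), 1); ((VCr false true), 2); ((Cap false), 3); ((Cap false), 0); ((Cap true), 0)] [:: ((Cup true), 0); ((VCr true false), 0); ((Cup true), 2); ((VCr true true), 1); ((Cup true), 1); ((VCr false true), 2); ((Cap false), 3); ((Cap true), 2); ((Cap false), 0)] [:: ((Cup true), 0); ((VCr true false), 0); ((Cup true), 2); ((VCr true true), 1); ((Cup true), 1); ((VCr false true), 2); ((Cap false), 3)] ([::] : diagram) 0 [:: ((Cap false), 0); ((Cap true), 0)] [:: ((Cap true), 2); ((Cap false), 0)] (CB_rv (RV_iso (@IR_interchange (Cap false) (Cap true) 0 0 erefl))) erefl erefl erefl ere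fl)).
apply: (LE_trans (@LE_cf [:: ((Cup true), 0); ((VCr true false), 0); ((Cup true), 2); ((VCr true true), 1); ((Cup true), 1); ((VCr false true), 2); ((Cap false), 3); ((Cap true), 2); ((Cap false), 0)] [:: ((Cup true), 0); ((VCr true false), 0); ((Cup true), 2); ((VCr true true), 1); ((VCr true true), 1); ((Cap true), 2); ((Cap false), 0)] [:: ((Cup true), 0); ((VCr true false), 0); ((Cup true), 2); ((VCr true true), 1)] [:: ((Cap true), 2); ((Cap false), 0)] 1 [:: ((Cup true), 0); ((VCr false true), 1); ((Cap false), 2)] [:: ((VCr true true), 0)] (CB_rv (RV_iso (IR_rot_vcr_r true true))) erefl erefl erefl erefl)).
apply: (LE_trans (@LE_cf [:: ((Cup true), 0); ((VCr true false), 0); ((Cup true), 2); ((VCr true true), 1); ((VCr true true), 1); ((Cap true), 2); ((Cap false), 0)] [:: ((Cup true), 0); ((VCr true false), 0); ((Cup true), 2); ((Cap true), 2); ((Cap false), 0)] [:: ((Cup true), 0); ((VCr true false), 0); ((Cup true), 2)] [:: ((Cap true), 2); ((Cap false), 0)] 1 [:: ((VCr true true), 0); ((VCr true true), 0)] ([::] : diagram) (CB_rv (RV_vR2 true true)) erefl erefl erefl erefl)).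
exact: (@LE_cb [:: ((Cup true), 0); ((VCr true false), 0); ((Cup true), 2); ((Cap true), 2); ((Cap false), 0)] [:: ((Cup true), 0); ((VCr true false), 0); ((Cap false), 0)] [:: ((Cup true), 0); ((VCr true false), 0)] [:: ((Cap false), 0)] 2 [:: ((Cup true), 0); ((Cap true), 0)] ([::] : diagram) (CB_birth true) erefl erefl erefl erefl).
Qed.

Lemma N_tf : LE [:: ((Cup true), 0); ((Cup false), 1); ((VCr false true), 1); ((Cap true), 1); ((Cap true), 0)] [:: ((Cup true), 0); ((VCr true false), 0); ((Cap false), 0)].
Proof.
apply: (LE_trans (@LE_cb [:: ((Cup true), 0); ((Cup false), 1); ((VCr false true), 1); ((Cap true), 1); ((Cap true), 0)] [:: ((Cup true), 0); ((Cup false), 1); ((VCr false true), 1); ((VCr true true), 0); ((VCr true true), 0); ((Cap true), 1); ((Cap true), 0)] [:: ((Cup true), 0); ((Cup false), 1); ((VCr false true), 1)] [:: ((Cap true), 1); ((Cap true), 0)] 0 ([::] : diagram) [:: ((VCr true true), 0); ((VCr true true), 0)] (CB_rv (RV_vR2 true true)) erefl erefl erefl erefl)).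
apply: (LE_trans (@LE_cb [:: ((Cup true), 0); ((Cup false), 1); ((VCr false true), 1); ((VCr true true), 0); ((VCr true true), 0); ((Cap true), 1); ((Cap true), 0)] [:: ((Cup true), 0); ((Cup false), 1); ((VCr false true), 1); ((VCr true true), 0); ((Cup false), 1); ((Cap true), 0); ((VCr true true), 0); ((Cap true), 1); ((Cap true), 0)] [:: ((Cup true), 0); ((Cup false), 1); ((VCr false true), 1); ((VCr true true), 0)] [:: ((VCr true true), 0); ((Cap true), 1); ((Cap true), 0)] 0 ([::] : diagram) [:: ((Cup false), 1); ((Cap true), 0)] (CB_rv (RV_iso (IR_zigzag_l false))) erefl erefl erefl erefl)).
apply: (LE_trans (@LE_cf [:: ((Cup true), 0); ((Cup false), 1); ((VCr false true), 1); ((VCr true true), 0); ((Cup false), 1); ((Cap true), 0); ((VCr true true), 0); ((Cap true), 1); ((Cap true), 0)] [:: ((Cup true), 0); ((Cup false), 1); ((VCr false true), 1); ((VCr true true), 0); ((Cup false), 1); ((VCr true true), 2); ((Cap true), 0); ((Cap true), 1); ((Cap true), 0)] [:: ((Cup true), 0); ((Cup false), 1); ((VCr false true), 1); ((VCr true true), 0); ((Cup false), 1)] [:: ((Cap true), 1); ((Cap true), 0)] 0 [:: ((Cap true), 0); ((VCr true true), 0)] [:: ((VCr true true), 2); ((Cap true), 0)] (CB_rv (RV_iso (@IR_interchange (Cap true) (VCr true true) 0 0 erefl))) erefl erefl erefl erefl)).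
apply: (LE_trans (@LE_cf [:: ((Cup true), 0); ((Cup false), 1); ((VCr false true), 1); ((VCr true true), 0); ((Cup false), 1); ((VCr true true), 2); ((Cap true), 0); ((Cap true), 1); ((Cap true), 0)] [:: ((Cup true), 0); ((Cup false), 1); ((VCr false true), 1); ((VCr true true), 0); ((Cup false), 1); ((VCr true true), 2); ((Cap true), 3); ((Cap true), 0); ((Cap true), 0)] [:: ((Cup true), 0); ((Cup false), 1); ((VCr false true), 1); ((VCr true true), 0); ((Cup false), 1); ((VCr true true), 2)] [:: ((Cap true), 0)] 0 [:: ((Cap true), 0); ((Cap true), 1)] [:: ((Cap true), 3); ((Cap true), 0)] (CB_rv (RV_iso (@IR_interchange (Cap true) (Cap true) 0 1 erefl))) erefl erefl erefl erefl)).
apply: (LE_trans (@LE_cf [:: ((Cup true), 0); ((Cup false), 1); ((VCr false true), 1); ((VCr true true), 0); ((Cup false), 1); ((VCr true true), 2); ((Cap true), 3); ((Cap true), 0); ((Cap true), 0)] [:: ((Cup true), 0); ((Cup false), 1); ((VCr false true), 1); ((VCr true true), 0); ((VCr true false), 1); ((Cap true), 0); ((Cap true), 0)] [:: ((Cup true), 0); ((Cup false), 1); ((VCr false true), 1); ((VCr true true), 0)] [:: ((Cap true), 0); ((Cap true), 0)] 1 [:: ((Cup false), 0); ((VCr true true), 1); ((Cap true), 2)] [:: ((VCr true false), 0)] (CB_rv (RV_iso (IR_rot_vcr_r true false))) erefl erefl erefl erefl)).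
apply: (LE_trans (@LE_cb [:: ((Cup true), 0); ((Cup false), 1); ((VCr false true), 1); ((VCr true true), 0); ((VCr true false), 1); ((Cap true), 0); ((Cap true), 0)] [:: ((Cup true), 0); ((Cup false), 1); ((VCr true false), 0); ((VCr true true), 1); ((VCr false true), 0); ((Cap true), 0); ((Cap true), 0)] [:: ((Cup true), 0); ((Cup false), 1)] [:: ((Cap true), 0); ((Cap true), 0)] 0 [:: ((VCr false true), 1); ((VCr true true), 0); ((VCr true false), 1)] [:: ((VCr true false), 0); ((VCr true true), 1); ((VCr false true), 0)] (CB_rv (@RV_tri Virtual Virtual Virtual true false true I)) erefl erefl erefl erefl)).
apply: (LE_trans (@LE_cf [:: ((Cup true), 0); ((Cup false), 1); ((VCr true false), 0); ((VCr true true), 1); ((VCr false true), 0); ((Cap true), 0); ((Cap true), 0)] [:: ((Cup true), 0); ((Cup false), 1); ((VCr true false), 0); ((Cap false), 0); ((Cup false), 0); ((VCr true true), 1); ((VCr false true), 0); ((Cap true), 0); ((Cap true), 0)] [:: ((Cup true), 0); ((Cup false), 1); ((VCr true false), 0)] [:: ((VCr true true), 1); ((VCr false true), 0); ((Cap true), 0); ((Cap true), 0)] 0 ([::] : diagram) [:: ((Cap false), 0); ((Cup false), 0)] (CB_saddle false) erefl erefl erefl erefl)).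
apply: (LE_trans (@LE_cf [:: ((Cup true), 0); ((Cup false), 1); ((VCr true false), 0); ((Cap false), 0); ((Cup false), 0); ((VCr true true), 1); ((VCr false true), 0); ((Cap true), 0); ((Cap true), 0)] [:: ((Cup true), 0); ((Cup false), 1); ((VCr true false), 0); ((Cap false), 0); ((Cup false), 0); ((VCr true true), 1); ((VCr false true), 0); ((Cap true), 2); ((Cap true), 0)] [:: ((Cup true), 0); ((Cup false), 1); ((VCr true false), 0); ((Cap false), 0); ((Cup false), 0); ((VCr true true), 1); ((VCr false true), 0)] ([::] : diagram) 0 [:: ((Cap true), 0); ((Cap true), 0)] [:: ((Cap true), 2); ((Cap true), 0)] (CB_rv (RV_iso (@IR_interchange (Cap true) (Cap true) 0 0 erefl))) erefl erefl erefl erefl)).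
apply: (LE_trans (@LE_cf [:: ((Cup true), 0); ((Cup false), 1); ((VCr true false), 0); ((Cap false), 0); ((Cup false), 0); ((VCr true true), 1); ((VCr false true), 0); ((Cap true), 2); ((Cap true), 0)] [:: ((Cup true), 0); ((Cup false), 1); ((VCr true false), 0); ((Cap false), 0); ((Cup false), 0); ((VCr true true), 1); ((Cap true), 2); ((VCr false true), 0); ((Cap true), 0)] [:: ((Cup true), 0); ((Cup false), 1); ((VCr true false), 0); ((Cap false), 0); ((Cup false), 0); ((VCr true true), 1)] [:: ((Cap true), 0)] 0 [:: ((VCr false true), 0); ((Cap true), 2)] [:: ((Cap true), 2); ((VCr false true), 0)] (CB_rv (RV_iso (@IR_interchange (VCr false true) (Cap true) 0 2 erefl))) erefl erefl erefl erefl)).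
apply: (LE_trans (@LE_cf [:: ((Cup true), 0); ((Cup false), 1); ((VCr true false), 0); ((Cap false), 0); ((Cup false), 0); ((VCr true true), 1); ((Cap true), 2); ((VCr false true), 0); ((Cap true), 0)] [:: ((Cup true), 0); ((Cup false), 1); ((VCr true false), 0); ((Cap false), 0); ((VCr true false), 0); ((VCr false true), 0); ((Cap true), 0)] [:: ((Cup true), 0); ((Cup false), 1); ((VCr true false), 0); ((Cap false), 0)] [:: ((VCr false true), 0); ((Cap true), 0)] 0 [:: ((Cup false), 0); ((VCr true true), 1); ((Cap true), 2)] [:: ((VCr true false), 0)] (CB_rv (RV_iso (IR_rot_vcr_r true false))) erefl erefl erefl erefl)).
apply: (LE_trans (@LE_cf [:: ((Cup true), 0); ((Cup false), 1); ((VCr true false), 0); ((Cap false), 0); ((VCr true false), 0); ((VCr false true), 0); ((Cap true), 0)] [:: ((Cup true), 0); ((Cup false), 1); ((VCr true false), 0); ((Cap false), 0); ((Cap true), 0)] [:: ((Cup true), 0); ((Cup false), 1); ((VCr true false), 0); ((Cap false), 0)] [:: ((Cap true), 0)] 0 [:: ((VCr true false), 0); ((VCr false true), 0)] ([::] : diagram) (CB_rv (RV_vR2 true false)) erefl erefl erefl erefl)).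
apply: (LE_trans (@LE_cf [:: ((Cup true), 0); ((Cup false), 1); ((VCr true false), 0); ((Cap false), 0); ((Cap true), 0)] [:: ((Cup true), 0); ((Cup false), 1); ((VCr true false), 0); ((Cap true), 2); ((Cap false), 0)] [:: ((Cup true), 0); ((Cup false), 1); ((VCr true false), 0)] ([::] : diagram) 0 [:: ((Cap false), 0); ((Cap true), 0)] [:: ((Cap true), 2); ((Cap false), 0)] (CB_rv (RV_iso (@IR_interchange (Cap false) (Cap true) 0 0 erefl))) erefl erefl erefl erefl)).
apply: (LE_trans (@LE_cf [:: ((Cup true), 0); ((Cup false), 1); ((VCr true false), 0); ((Cap true), 2); ((Cap false), 0)] [:: ((Cup true), 0); ((Cup false), 1); ((Cap true), 2); ((VCr true false), 0); ((Cap false), 0)] [:: ((Cup true), 0); ((Cup false), 1)] [:: ((Cap false), 0)] 0 [:: ((VCr true false), 0); ((Cap true), 2)] [:: ((Cap true), 2); ((VCr true false), 0)] (CB_rv (RV_iso (@IR_interchange (VCr true false) (Cap true) 0 2 erefl))) erefl erefl erefl erefl)).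
exact: (@LE_cf [:: ((Cup true), 0); ((Cup false), 1); ((Cap true), 2); ((VCr true false), 0); ((Cap false), 0)] [:: ((Cup true), 0); ((VCr true false), 0); ((Cap false), 0)] [:: ((Cup true), 0)] [:: ((VCr true false), 0); ((Cap false), 0)] 1 [:: ((Cup false), 0); ((Cap true), 1)] ([::] : diagram) (CB_rv (RV_iso (IR_zigzag_r false))) erefl erefl erefl erefl).
Qed.

Lemma N_ft : LE [:: ((Cup false), 0); ((Cup true), 1); ((VCr true false), 1); ((Cap false), 1); ((Cap false), 0)] [:: ((Cup true), 0); ((VCr true false), 0); ((Cap false), 0)].
Proof.
apply: (LE_trans (@LE_cb [:: ((Cup false), 0); ((Cup true), 1); ((VCr true false), 1); ((Cap false), 1); ((Cap false), 0)] [:: ((Cup false), 0); ((Cup true), 1); ((VCr true false), 1); ((VCr true true), 2); ((VCr true true), 2); ((Cap false), 1); ((Cap false), 0)] [:: ((Cup false), 0); ((Cup true), 1); ((VCr true false), 1)] [:: ((Cap false), 1); ((Cap false), 0)] 2 ([::] : diagram) [:: ((VCr true true), 0); ((VCr true true), 0)] (CB_rv (RV_vR2 true true)) erefl erefl erefl erefl)).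
apply: (LE_trans (@LE_cb [:: ((Cup false), 0); ((Cup true), 1); ((VCr true false), 1); ((VCr true true), 2); ((VCr true true), 2); ((Cap false), 1); ((Cap false), 0)] [:: ((Cup false), 0); ((Cup true), 1); ((VCr true false), 1); ((VCr true true), 2); ((Cup true), 3); ((Cap false), 4); ((VCr true true), 2); ((Cap false), 1); ((Cap false), 0)] [:: ((Cup false), 0); ((Cup true), 1); ((VCr true false), 1); ((VCr true true), 2)] [:: ((VCr true true), 2); ((Cap false), 1); ((Cap false), 0)] 3 ([::] : diagram) [:: ((Cup true), 0); ((Cap false), 1)] (CB_rv (RV_iso (IR_zigzag_r true))) erefl erefl erefl erefl)).
apply: (LE_trans (@LE_cb [:: ((Cup false), 0); ((Cup true), 1); ((VCr true false), 1); ((VCr true true), 2); ((Cup true), 3); ((Cap false), 4); ((VCr true true), 2); ((Cap false), 1); ((Cap false), 0)] [:: ((Cup false), 0); ((Cup true), 1); ((VCr true false), 1); ((VCr true true), 2); ((Cup true), 3); ((VCr true true), 2); ((Cap false), 4); ((Cap false), 1); ((Cap false), 0)] [:: ((Cup false), 0); ((Cup true), 1); ((VCr true false), 1); ((VCr true true), 2); ((Cup true), 3)] [:: ((Cap false), 1); ((Cap false), 0)] 0 [:: ((Cap false), 4); ((VCr true true), 2)] [:: ((VCr true true), 2); ((Cap false), 4)] (CB_rv (RV_iso (@IR_interchange (VCr true true) (Cap false) 2 4 erefl))) erefl erefl erefl erefl)).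
apply: (LE_trans (@LE_cb [:: ((Cup false), 0); ((Cup true), 1); ((VCr true false), 1); ((VCr true true), 2); ((Cup true), 3); ((VCr true true), 2); ((Cap false), 4); ((Cap false), 1); ((Cap false), 0)] [:: ((Cup false), 0); ((Cup true), 1); ((VCr true false), 1); ((VCr true true), 2); ((Cup true), 3); ((VCr true true), 2); ((Cap false), 1); ((Cap false), 2); ((Cap false), 0)] [:: ((Cup false), 0); ((Cup true), 1); ((VCr true false), 1); ((VCr true true), 2); ((Cup true), 3); ((VCr true true), 2)] [:: ((Cap false), 0)] 0 [:: ((Cap false), 4); ((Cap false), 1)] [:: ((Cap false), 1); ((Cap false), 2)] (CB_rv (RV_iso (@IR_interchange (Cap false) (Cap false) 1 2 erefl))) erefl erefl erefl erefl)).
apply: (LE_trans (@LE_cf [:: ((Cup false), 0); ((Cup true), 1); ((VCr true false), 1); ((VCr true true), 2); ((Cup true), 3); ((VCr true true), 2); ((Cap false), 1); ((Cap false), 2); ((Cap false), 0)] [:: ((Cup false), 0); ((Cup true), 1); ((VCr true false), 1); ((VCr true true), 2); ((VCr false true), 1); ((Cap false), 2); ((Cap false), 0)] [:: ((Cup false), 0); ((Cup true), 1); ((VCr true false), 1); ((VCr true true), 2)] [:: ((Cap false), 2); ((Cap false), 0)] 1 [:: ((Cup true), 2); ((VCr true true), 1); ((Cap false), 0)] [:: ((VCr false true), 0)] (CB_rv (RV_iso (IR_rot_vcr_l true true))) erefl erefl erefl erefl)).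
apply: (LE_trans (@LE_cf [:: ((Cup false), 0); ((Cup true), 1); ((VCr true false), 1); ((VCr true true), 2); ((VCr false true), 1); ((Cap false), 2); ((Cap false), 0)] [:: ((Cup false), 0); ((Cup true), 1); ((VCr false true), 2); ((VCr true true), 1); ((VCr true false), 2); ((Cap false), 2); ((Cap false), 0)] [:: ((Cup false), 0); ((Cup true), 1)] [:: ((Cap false), 2); ((Cap false), 0)] 1 [:: ((VCr true false), 0); ((VCr true true), 1); ((VCr false true), 0)] [:: ((VCr false true), 1); ((VCr true true), 0); ((VCr true false), 1)] (CB_rv (@RV_tri Virtual Virtual Virtual true false true I)) erefl erefl erefl erefl)).
apply: (LE_trans (@LE_cb [:: ((Cup false), 0); ((Cup true), 1); ((VCr false true), 2); ((VCr true true), 1); ((VCr true false), 2); ((Cap false), 2); ((Cap false), 0)] [:: ((Cup false), 0); ((Cup true), 1); ((VCr false true), 2); ((Cup true), 4); ((Cap false), 3); ((VCr true true), 1); ((VCr true false), 2); ((Cap false), 2); ((Cap false), 0)] [:: ((Cup false), 0); ((Cup true), 1); ((VCr false true), 2)] [:: ((VCr true true), 1); ((VCr true false), 2); ((Cap false), 2); ((Cap false), 0)] 3 ([::] : diagram) [:: ((Cup true), 1); ((Cap false), 0)] (CB_rv (RV_iso (IR_zigzag_l true))) erefl erefl erefl erefl)).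
apply: (LE_trans (@LE_cf [:: ((Cup false), 0); ((Cup true), 1); ((VCr false true), 2); ((Cup true), 4); ((Cap false), 3); ((VCr true true), 1); ((VCr true false), 2); ((Cap false), 2); ((Cap false), 0)] [:: ((Cup false), 0); ((Cup true), 1); ((Cup true), 4); ((VCr false true), 2); ((Cap false), 3); ((VCr true true), 1); ((VCr true false), 2); ((Cap false), 2); ((Cap false), 0)] [:: ((Cup false), 0); ((Cup true), 1)] [:: ((Cap false), 3); ((VCr true true), 1); ((VCr true false), 2); ((Cap false), 2); ((Cap false), 0)] 0 [:: ((VCr false true), 2); ((Cup true), 4)] [:: ((Cup true), 4); ((VCr false true), 2)] (CB_rv (RV_iso (@IR_interchange (VCr false true) (Cup true) 2 4 erefl))) erefl erefl erefl erefl)).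
apply: (LE_trans (@LE_cf [:: ((Cup false), 0); ((Cup true), 1); ((Cup true), 4); ((VCr false true), 2); ((Cap false), 3); ((VCr true true), 1); ((VCr true false), 2); ((Cap false), 2); ((Cap false), 0)] [:: ((Cup false), 0); ((Cup true), 2); ((Cup true), 1); ((VCr false true), 2); ((Cap false), 3); ((VCr true true), 1); ((VCr true false), 2); ((Cap false), 2); ((Cap false), 0)] [:: ((Cup false), 0)] [:: ((VCr false true), 2); ((Cap false), 3); ((VCr true true), 1); ((VCr true false), 2); ((Cap false), 2); ((Cap false), 0)] 0 [:: ((Cup true), 1); ((Cup true), 4)] [:: ((Cup true), 2); ((Cup true), 1)] (CB_rv (RV_iso (@IR_interchange (Cup true) (Cup true) 1 4 erefl))) erefl erefl erefl erefl)).
apply: (LE_trans (@LE_cf [:: ((Cup false), 0); ((Cup true), 2); ((Cup true), 1); ((VCr false true), 2); ((Cap false), 3); ((VCr true true), 1); ((VCr true false), 2); ((Cap false), 2); ((Cap false), 0)] [:: ((Cup false), 0); ((Cup true), 2); ((VCr true true), 1); ((VCr true true), 1); ((VCr true false), 2); ((Cap false), 2); ((Cap false), 0)] [:: ((Cup false), 0); ((Cup true), 2)] [:: ((VCr true true), 1); ((VCr true false), 2); ((Cap false), 2); ((Cap false), 0)] 1 [:: ((Cup true), 0); ((VCr false true), 1); ((Cap false), 2)] [:: ((VCr true true), 0)] (CB_rv (RV_iso (IR_rot_vcr_r true true))) erefl erefl erefl erefl)).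
apply: (LE_trans (@LE_cf [:: ((Cup false), 0); ((Cup true), 2); ((VCr true true), 1); ((VCr true true), 1); ((VCr true false), 2); ((Cap false), 2); ((Cap false), 0)] [:: ((Cup false), 0); ((Cup true), 2); ((VCr true false), 2); ((Cap false), 2); ((Cap false), 0)] [:: ((Cup false), 0); ((Cup true), 2)] [:: ((VCr true false), 2); ((Cap false), 2); ((Cap false), 0)] 1 [:: ((VCr true true), 0); ((VCr true true), 0)] ([::] : diagram) (CB_rv (RV_vR2 true true)) erefl erefl erefl erefl)).
apply: (LE_trans (@LE_cb [:: ((Cup false), 0); ((Cup true), 2); ((VCr true false), 2); ((Cap false), 2); ((Cap false), 0)] [:: ((Cup false), 0); ((Cup true), 2); ((VCr true false), 2); ((Cap false), 0); ((Cap false), 0)] [:: ((Cup false), 0); ((Cup true), 2); ((VCr true false), 2)] ([::] : diagram) 0 [:: ((Cap false), 2); ((Cap false), 0)] [:: ((Cap false), 0); ((Cap false), 0)] (CB_rv (RV_iso (@IR_interchange (Cap false) (Cap false) 0 0 erefl))) erefl erefl erefl erefl)).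
apply: (LE_trans (@LE_cb [:: ((Cup false), 0); ((Cup true), 2); ((VCr true false), 2); ((Cap false), 0); ((Cap false), 0)] [:: ((Cup false), 0); ((Cup true), 2); ((Cap false), 0); ((VCr true false), 0); ((Cap false), 0)] [:: ((Cup false), 0); ((Cup true), 2)] [:: ((Cap false), 0)] 0 [:: ((VCr true false), 2); ((Cap false), 0)] [:: ((Cap false), 0); ((VCr true false), 0)] (CB_rv (RV_iso (@IR_interchange (Cap false) (VCr true false) 0 0 erefl))) erefl erefl erefl erefl)).
apply: (LE_trans (@LE_cb [:: ((Cup false), 0); ((Cup true), 2); ((Cap false), 0); ((VCr true false), 0); ((Cap false), 0)] [:: ((Cup false), 0); ((Cap false), 0); ((Cup true), 0); ((VCr true false), 0); ((Cap false), 0)] [:: ((Cup false), 0)] [:: ((VCr true false), 0); ((Cap false), 0)] 0 [:: ((Cup true), 2); ((Cap false), 0)] [:: ((Cap false), 0); ((Cup true), 0)] (CB_rv (RV_iso (@IR_interchange (Cap false) (Cup true) 0 0 erefl))) erefl erefl erefl erefl)).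
exact: (@LE_cb [:: ((Cup false), 0); ((Cap false), 0); ((Cup true), 0); ((VCr true false), 0); ((Cap false), 0)] [:: ((Cup true), 0); ((VCr true false), 0); ((Cap false), 0)] ([::] : diagram) [:: ((Cup true), 0); ((VCr true false), 0); ((Cap false), 0)] 0 [:: ((Cup false), 0); ((Cap false), 0)] ([::] : diagram) (CB_birth false) erefl erefl erefl erefl).
Qed.

Lemma N_ff : LE [:: ((Cup false), 0); ((Cup false), 1); ((VCr false true), 1); ((Cap true), 1); ((Cap false), 0)] [:: ((Cup true), 0); ((VCr true false), 0); ((Cap false), 0)].
Proof.
apply: (LE_trans (@LE_cb [:: ((Cup false), 0); ((Cup false), 1); ((VCr false true), 1); ((Cap true), 1); ((Cap false), 0)] [:: ((Cup false), 0); ((Cup false), 1); ((VCr true true), 2); ((VCr true true), 2); ((VCr false true), 1); ((Cap true), 1); ((Cap false), 0)] [:: ((Cup false), 0); ((Cup false), 1)] [:: ((VCr false true), 1); ((Cap true), 1); ((Cap false), 0)] 2 ([::] : diagram) [:: ((VCr true true), 0); ((VCr true true), 0)] (CB_rv (RV_vR2 true true)) erefl erefl erefl erefl)).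
apply: (LE_trans (@LE_cb [:: ((Cup false), 0); ((Cup false), 1); ((VCr true true), 2); ((VCr true true), 2); ((VCr false true), 1); ((Cap true), 1); ((Cap false), 0)] [:: ((Cup false), 0); ((Cup false), 1); ((VCr true true), 2); ((Cup false), 4); ((Cap true), 3); ((VCr true true), 2); ((VCr false true), 1); ((Cap true), 1); ((Cap false), 0)] [:: ((Cup false), 0); ((Cup false), 1); ((VCr true true), 2)] [:: ((VCr true true), 2); ((VCr false true), 1); ((Cap true), 1); ((Cap false), 0)] 3 ([::] : diagram) [:: ((Cup false), 1); ((Cap true), 0)] (CB_rv (RV_iso (IR_zigzag_l false))) erefl erefl erefl erefl)).
apply: (LE_trans (@LE_cf [:: ((Cup false), 0); ((Cup false), 1); ((VCr true true), 2); ((Cup false), 4); ((Cap true), 3); ((VCr true true), 2); ((VCr false true), 1); ((Cap true), 1); ((Cap false), 0)] [:: ((Cup false), 0); ((Cup false), 1); ((Cup false), 4); ((VCr true true), 2); ((Cap true), 3); ((VCr true true), 2); ((VCr false true), 1); ((Cap true), 1); ((Cap false), 0)] [:: ((Cup false), 0); ((Cup false), 1)] [:: ((Cap true), 3); ((VCr true true), 2); ((VCr false true), 1); ((Cap true), 1); ((Cap false), 0)] 0 [:: ((VCr true true), 2); ((Cup false), 4)] [:: ((Cup false), 4); ((VCr true true), 2)] (CB_rv (RV_iso (@IR_interchange (VCr true true) (Cup false) 2 4 erefl))) erefl erefl erefl erefl)).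
apply: (LE_trans (@LE_cf [:: ((Cup false), 0); ((Cup false), 1); ((Cup false), 4); ((VCr true true), 2); ((Cap true), 3); ((VCr true true), 2); ((VCr false true), 1); ((Cap true), 1); ((Cap false), 0)] [:: ((Cup false), 0); ((Cup false), 2); ((Cup false), 1); ((VCr true true), 2); ((Cap true), 3); ((VCr true true), 2); ((VCr false true), 1); ((Cap true), 1); ((Cap false), 0)] [:: ((Cup false), 0)] [:: ((VCr true true), 2); ((Cap true), 3); ((VCr true true), 2); ((VCr false true), 1); ((Cap true), 1); ((Cap false), 0)] 0 [:: ((Cup false), 1); ((Cup false), 4)] [:: ((Cup false), 2); ((Cup false), 1)] (CB_rv (RV_iso (@IR_interchange (Cup false) (Cup false) 1 4 erefl))) erefl erefl erefl erefl)).
apply: (LE_trans (@LE_cf [:: ((Cup false), 0); ((Cup false), 2); ((Cup false), 1); ((VCr true true), 2); ((Cap true), 3); ((VCr true true), 2); ((VCr false true), 1); ((Cap true), 1); ((Cap false), 0)] [:: ((Cup false), 0); ((Cup false), 2); ((VCr true false), 1); ((VCr true true), 2); ((VCr false true), 1); ((Cap true), 1); ((Cap false), 0)] [:: ((Cup false), 0); ((Cup false), 2)] [:: ((VCr true true), 2); ((VCr false true), 1); ((Cap true), 1); ((Cap false), 0)] 1 [:: ((Cup false), 0); ((VCr true true), 1); ((Cap true), 2)] [:: ((VCr true false), 0)] (CB_rv (RV_iso (IR_rot_vcr_r true false))) erefl erefl erefl erefl)).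
apply: (LE_trans (@LE_cf [:: ((Cup false), 0); ((Cup false), 2); ((VCr true false), 1); ((VCr true true), 2); ((VCr false true), 1); ((Cap true), 1); ((Cap false), 0)] [:: ((Cup false), 0); ((Cup false), 2); ((VCr false true), 2); ((VCr true true), 1); ((VCr true false), 2); ((Cap true), 1); ((Cap false), 0)] [:: ((Cup false), 0); ((Cup false), 2)] [:: ((Cap true), 1); ((Cap false), 0)] 1 [:: ((VCr true false), 0); ((VCr true true), 1); ((VCr false true), 0)] [:: ((VCr false true), 1); ((VCr true true), 0); ((VCr true false), 1)] (CB_rv (@RV_tri Virtual Virtual Virtual true false true I)) erefl erefl erefl erefl)).
apply: (LE_trans (@LE_cf [:: ((Cup false), 0); ((Cup false), 2); ((VCr false true), 2); ((VCr true true), 1); ((VCr true false), 2); ((Cap true), 1); ((Cap false), 0)] [:: ((Cup false), 0); ((Cup false), 2); ((VCr false true), 2); ((VCr true true), 1); ((Cap true), 2); ((Cup true), 2); ((VCr true false), 2); ((Cap true), 1); ((Cap false), 0)] [:: ((Cup false), 0); ((Cup false), 2); ((VCr false true), 2); ((VCr true true), 1)] [:: ((VCr true false), 2); ((Cap true), 1); ((Cap false), 0)] 2 ([::] : diagram) [:: ((Cap true), 0); ((Cup true), 0)] (CB_saddle true) erefl erefl erefl erefl)).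
apply: (LE_trans (@LE_cf [:: ((Cup false), 0); ((Cup false), 2); ((VCr false true), 2); ((VCr true true), 1); ((Cap true), 2); ((Cup true), 2); ((VCr true false), 2); ((Cap true), 1); ((Cap false), 0)] [:: ((Cup false), 0); ((Cup false), 0); ((VCr false true), 2); ((VCr true true), 1); ((Cap true), 2); ((Cup true), 2); ((VCr true false), 2); ((Cap true), 1); ((Cap false), 0)] ([::] : diagram) [:: ((VCr false true), 2); ((VCr true true), 1); ((Cap true), 2); ((Cup true), 2); ((VCr true false), 2); ((Cap true), 1); ((Cap false), 0)] 0 [:: ((Cup false), 0); ((Cup false), 2)] [:: ((Cup false), 0); ((Cup false), 0)] (CB_rv (RV_iso (@IR_interchange (Cup false) (Cup false) 0 2 erefl))) erefl erefl erefl erefl)).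
apply: (LE_trans (@LE_cf [:: ((Cup false), 0); ((Cup false), 0); ((VCr false true), 2); ((VCr true true), 1); ((Cap true), 2); ((Cup true), 2); ((VCr true false), 2); ((Cap true), 1); ((Cap false), 0)] [:: ((Cup false), 0); ((VCr false true), 0); ((Cup false), 0); ((VCr true true), 1); ((Cap true), 2); ((Cup true), 2); ((VCr true false), 2); ((Cap true), 1); ((Cap false), 0)] [:: ((Cup false), 0)] [:: ((VCr true true), 1); ((Cap true), 2); ((Cup true), 2); ((VCr true false), 2); ((Cap true), 1); ((Cap false), 0)] 0 [:: ((Cup false), 0); ((VCr false true), 2)] [:: ((VCr false true), 0); ((Cup false), 0)] (CB_rv (RV_iso (@IR_interchange (Cup false) (VCr false true) 0 2 erefl))) erefl erefl erefl erefl)).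
apply: (LE_trans (@LE_cf [:: ((Cup false), 0); ((VCr false true), 0); ((Cup false), 0); ((VCr true true), 1); ((Cap true), 2); ((Cup true), 2); ((VCr true false), 2); ((Cap true), 1); ((Cap false), 0)] [:: ((Cup false), 0); ((VCr false true), 0); ((VCr true false), 0); ((Cup true), 2); ((VCr true false), 2); ((Cap true), 1); ((Cap false), 0)] [:: ((Cup false), 0); ((VCr false true), 0)] [:: ((Cup true), 2); ((VCr true false), 2); ((Cap true), 1); ((Cap false), 0)] 0 [:: ((Cup false), 0); ((VCr true true), 1); ((Cap true), 2)] [:: ((VCr true false), 0)] (CB_rv (RV_iso (IR_rot_vcr_r true false))) erefl erefl erefl erefl)).
apply: (LE_trans (@LE_cf [:: ((Cup false), 0); ((VCr false true), 0); ((VCr true false), 0); ((Cup true), 2); ((VCr true false), 2); ((Cap true), 1); ((Cap false), 0)] [:: ((Cup false), 0); ((Cup true), 2); ((VCr true false), 2); ((Cap true), 1); ((Cap false), 0)] [:: ((Cup false), 0)] [:: ((Cup true), 2); ((VCr true false), 2); ((Cap true), 1); ((Cap false), 0)] 0 [:: ((VCr false true), 0); ((VCr true false), 0)] ([::] : diagram) (CB_rv (RV_vR2 false true)) erefl erefl erefl erefl)).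
apply: (LE_trans (@LE_cf [:: ((Cup false), 0); ((Cup true), 2); ((VCr true false), 2); ((Cap true), 1); ((Cap false), 0)] [:: ((Cup true), 0); ((Cup false), 0); ((VCr true false), 2); ((Cap true), 1); ((Cap false), 0)] ([::] : diagram) [:: ((VCr true false), 2); ((Cap true), 1); ((Cap false), 0)] 0 [:: ((Cup false), 0); ((Cup true), 2)] [:: ((Cup true), 0); ((Cup false), 0)] (CB_rv (RV_iso (@IR_interchange (Cup false) (Cup true) 0 2 erefl))) erefl erefl erefl erefl)).
apply: (LE_trans (@LE_cf [:: ((Cup true), 0); ((Cup false), 0); ((VCr true false), 2); ((Cap true), 1); ((Cap false), 0)] [:: ((Cup true), 0); ((VCr true false), 0); ((Cup false), 0); ((Cap true), 1); ((Cap false), 0)] [:: ((Cup true), 0)] [:: ((Cap true), 1); ((Cap false), 0)] 0 [:: ((Cup false), 0); ((VCr true false), 2)] [:: ((VCr true false), 0); ((Cup false), 0)] (CB_rv (RV_iso (@IR_interchange (Cup false) (VCr true false) 0 2 erefl))) erefl erefl erefl erefl)).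
exact: (@LE_cf [:: ((Cup true), 0); ((VCr true false), 0); ((Cup false), 0); ((Cap true), 1); ((Cap false), 0)] [:: ((Cup true), 0); ((VCr true false), 0); ((Cap false), 0)] [:: ((Cup true), 0); ((VCr true false), 0)] [:: ((Cap false), 0)] 0 [:: ((Cup false), 0); ((Cap true), 1)] ([::] : diagram) (CB_rv (RV_iso (IR_zigzag_r false))) erefl erefl erefl erefl).
Qed.

Lemma TF_lem : LE [:: ((Cup false), 0); ((VCr false true), 0); ((Cap true), 0)] [:: ((Cup true), 0); ((VCr true false), 0); ((Cap false), 0)].
Proof.
apply: (LE_trans (@LE_cb [:: ((Cup false), 0); ((VCr false true), 0); ((Cap true), 0)] [:: ((Cup false), 0); ((Cup true), 2); ((VCr true true), 1); ((Cap false), 0); ((Cap true), 0)] [:: ((Cup false), 0)] [:: ((Cap true), 0)] 0 [:: ((VCr false true), 0)] [:: ((Cup true), 2); ((VCr true true), 1); ((Cap false), 0)] (CB_rv (RV_iso (IR_rot_vcr_l true true))) erefl erefl erefl erefl)).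
apply: (LE_trans (@LE_cf [:: ((Cup false), 0); ((Cup true), 2); ((VCr true true), 1); ((Cap false), 0); ((Cap true), 0)] [:: ((Cup false), 0); ((Cup true), 2); ((VCr true true), 1); ((Cap true), 2); ((Cap false), 0)] [:: ((Cup false), 0); ((Cup true), 2); ((VCr true true), 1)] ([::] : diagram) 0 [:: ((Cap false), 0); ((Cap true), 0)] [:: ((Cap true), 2); ((Cap false), 0)] (CB_rv (RV_iso (@IR_interchange (Cap false) (Cap true) 0 0 erefl))) erefl erefl erefl erefl)).
apply: (LE_trans (@LE_cf [:: ((Cup false), 0); ((Cup true), 2); ((VCr true true), 1); ((Cap true), 2); ((Cap false), 0)] [:: ((Cup true), 0); ((Cup false), 0); ((VCr true true), 1); ((Cap true), 2); ((Cap false), 0)] ([::] : diagram) [:: ((VCr true true), 1); ((Cap true), 2); ((Cap false), 0)] 0 [:: ((Cup false), 0); ((Cup true), 2)] [:: ((Cup true), 0); ((Cup false), 0)] (CB_rv (RV_iso (@IR_interchange (Cup false) (Cup true) 0 2 erefl))) erefl erefl erefl erefl)).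
exact: (@LE_cf [:: ((Cup true), 0); ((Cup false), 0); ((VCr true true), 1); ((Cap true), 2); ((Cap false), 0)] [:: ((Cup true), 0); ((VCr true false), 0); ((Cap false), 0)] [:: ((Cup true), 0)] [:: ((Cap false), 0)] 0 [:: ((Cup false), 0); ((VCr true true), 1); ((Cap true), 2)] [:: ((VCr true false), 0)] (CB_rv (RV_iso (IR_rot_vcr_r true false))) erefl erefl erefl erefl).
Qed.

Lemma TT_lem : LE [:: ((Cup true), 0); ((VCr true false), 0); ((Cap false), 0); ((Cup true), 0); ((VCr true false), 0); ((Cap false), 0)] ([::] : diagram).
Proof.
apply: (LE_trans (@LE_cb [:: ((Cup true), 0); ((VCr true false), 0); ((Cap false), 0); ((Cup true), 0); ((VCr true false), 0); ((Cap false), 0)] [:: ((Cup true), 0); ((Cup false), 0); ((VCr true true), 1); ((Cap true), 2); ((Cap false), 0); ((Cup true), 0); ((VCr true false), 0); ((Cap false), 0)] [:: ((Cup true), 0)] [:: ((Cap false), 0); ((Cup true), 0); ((VCr true false), 0); ((Cap false), 0)] 0 [:: ((VCr true false), 0)] [:: ((Cup false), 0); ((VCr true true), 1); ((Cap true), 2)] (CB_rv (RV_iso (IR_rot_vcr_r true false))) erefl erefl erefl erefl)).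
apply: (LE_trans (@LE_cb [:: ((Cup true), 0); ((Cup false), 0); ((VCr true true), 1); ((Cap true), 2); ((Cap false), 0); ((Cup true), 0); ((VCr true false), 0); ((Cap false), 0)] [:: ((Cup false), 0); ((Cup true), 2); ((VCr true true), 1); ((Cap true), 2); ((Cap false), 0); ((Cup true), 0); ((VCr true false), 0); ((Cap false), 0)] ([::] : diagram) [:: ((VCr true true), 1); ((Cap true), 2); ((Cap false), 0); ((Cup true), 0); ((VCr true false), 0); ((Cap false), 0)] 0 [:: ((Cup true), 0); ((Cup false), 0)] [:: ((Cup false), 0); ((Cup true), 2)] (CB_rv (RV_iso (@IR_interchange (Cup false) (Cup true) 0 2 erefl))) erefl erefl erefl erefl)).
apply: (LE_trans (@LE_cb [:: ((Cup false), 0); ((Cup true), 2); ((VCr true true), 1); ((Cap true), 2); ((Cap false), 0); ((Cup true), 0); ((VCr true false), 0); ((Cap false), 0)] [:: ((Cup false), 0); ((Cup true), 2); ((VCr true true), 1); ((Cap false), 0); ((Cap true), 0); ((Cup true), 0); ((VCr true false), 0); ((Cap false), 0)] [:: ((Cup false), 0); ((Cup true), 2); ((VCr true true), 1)] [:: ((Cup true), 0); ((VCr true false), 0); ((Cap false), 0)] 0 [:: ((Cap true), 2); ((Cap false), 0)] [:: ((Cap false), 0); ((Cap true), 0)] (CB_rv (RV_iso (@IR_interchange (Cap false) (Cap true) 0 0 erefl))) erefl erefl erefl erefl)).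
apply: (LE_trans (@LE_cf [:: ((Cup false), 0); ((Cup true), 2); ((VCr true true), 1); ((Cap false), 0); ((Cap true), 0); ((Cup true), 0); ((VCr true false), 0); ((Cap false), 0)] [:: ((Cup false), 0); ((VCr false true), 0); ((Cap true), 0); ((Cup true), 0); ((VCr true false), 0); ((Cap false), 0)] [:: ((Cup false), 0)] [:: ((Cap true), 0); ((Cup true), 0); ((VCr true false), 0); ((Cap false), 0)] 0 [:: ((Cup true), 2); ((VCr true true), 1); ((Cap false), 0)] [:: ((VCr false true), 0)] (CB_rv (RV_iso (IR_rot_vcr_l true true))) erefl erefl erefl erefl)).
apply: (LE_trans (@LE_cb [:: ((Cup false), 0); ((VCr false true), 0); ((Cap true), 0); ((Cup true), 0); ((VCr true false), 0); ((Cap false), 0)] [:: ((Cup false), 0); ((VCr false true), 0); ((VCr true false), 0); ((Cap false), 0)] [:: ((Cup false), 0); ((VCr false true), 0)] [:: ((VCr true false), 0); ((Cap false), 0)] 0 [:: ((Cap true), 0); ((Cup true), 0)] ([::] : diagram) (CB_saddle true) erefl erefl erefl erefl)).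
apply: (LE_trans (@LE_cf [:: ((Cup false), 0); ((VCr false true), 0); ((VCr true false), 0); ((Cap false), 0)] [:: ((Cup false), 0); ((Cap false), 0)] [:: ((Cup false), 0)] [:: ((Cap false), 0)] 0 [:: ((VCr false true), 0); ((VCr true false), 0)] ([::] : diagram) (CB_rv (RV_vR2 false true)) erefl erefl erefl erefl)).
exact: (@LE_cb [:: ((Cup false), 0); ((Cap false), 0)] ([::] : diagram) ([::] : diagram) ([::] : diagram) 0 [:: ((Cup false), 0); ((Cap false), 0)] ([::] : diagram) (CB_birth false) erefl erefl erefl erefl).
Qed.


Definition T (a : bool) : diagram := [:: (Cup a, 0); (VCr a (~~ a), 0); (Cap (~~ a), 0)].
Definition TC (b k : bool) : diagram := [:: (Cup b, 0); (Cr k b (~~ b), 0); (Cap (~~ b), 0)].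
Definition Nd (c a : bool) : diagram := (Cup c, 0) :: shift 1 (T a) ++ [:: (Cap c, 0)].

Lemma TC_ok b k : LE (TC b k) [::].
Proof. case: b; case: k; [exact: TC_tt|exact: TC_tf|exact: TC_ft|exact: TC_ff]. Qed.

Lemma Nd_ok c a : LE (Nd c a) (T true).
Proof. case: c; case: a; [exact: N_tt|exact: N_tf|exact: N_ft|exact: N_ff]. Qed.

Lemma T_any a : LE (T a) (T true).
Proof. case: a; [exact: LE_refl|exact: TF_lem]. Qed.

Lemma TT_ok : LE (T true ++ T true) [::].
Proof. exact: TT_lem. Qed.

Lemma T_closed a : run [::] (T a) = Some [::].
Proof. by case: a. Qed.

Lemma T_valid a : valid (T a).
Proof. exact: T_closed. Qed.

Definition Tpow n : diagram := if odd n then T true else [::].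

Lemma Tpow_valid n : valid (Tpow n).
Proof. by rewrite /Tpow; case: ifP. Qed.

Lemma Tpow_cat a b : cob (Tpow a ++ Tpow b) (Tpow (a + b)).
Proof.
rewrite /Tpow oddD; case: (odd a); case: (odd b) => /=; rewrite ?cats0; try exact: cob_refl.
have := @LE_use' _ _ [::] [::] 0 (T true ++ T true) [::] TT_ok.
by rewrite !cats0 shift0 /= => H; apply: H.
Qed.

Lemma ROTC k o : LE [:: (Cr k o o, 0)] [:: (Cup (~~ o), 2); (Cr (~~ k) o (~~ o), 1); (Cap o, 0)].
Proof.
apply: LE_rule_b.
  by case: k; case: o; apply/CB_rv/RV_iso; [exact: (IR_rot_cr_l false true false)
   | exact: (IR_rot_cr_l false false true) | exact: (IR_rot_cr_l true true false)
   | exact: (IR_rot_cr_l true false true)].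
move=> z z'; case: k; case: o; case: z => [|[] [|[] z]] //=;
  by rewrite /apply_slice /= ?take0 ?drop0 /=.
Qed.

Lemma ROTV o : LE [:: (VCr o o, 0)] [:: (Cup (~~ o), 2); (VCr o (~~ o), 1); (Cap o, 0)].
Proof.
apply: LE_rule_b.
  by case: o; apply/CB_rv/RV_iso; [exact: (IR_rot_vcr_l true false)
   | exact: (IR_rot_vcr_l false true)].
move=> z z'; case: o; case: z => [|[] [|[] z]] //=;
  by rewrite /apply_slice /= ?take0 ?drop0 /=.
Qed.

Lemma LE_ctx0 x y a b : LE x y -> x <> [::] -> LE (a ++ x ++ b) (a ++ y ++ b).
Proof. by move=> H Hx; have := LE_ctx a b 0 H Hx; rewrite !shift0. Qed.

Lemma UC1 c a i j : i <= j ->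
  LE ((Cup c, j) :: shift i (T a)) (shift i (T a) ++ [:: (Cup c, j)]).
Proof.
move=> Hij; rewrite /shift /= !add0n.
apply: (@LE_trans _ [:: (Cup a, i); (Cup c, j.+2); (VCr a (~~ a), i); (Cap (~~ a), i)]).
  have := @LE_ctx0 [:: (Cup c, j); (Cup a, i)] [:: (Cup a, i); (Cup c, j.+2)] [::]
    [:: (VCr a (~~ a), i); (Cap (~~ a), i)].
  apply => //; apply: LE_int_b => /=; [lia | by rewrite addn0 -addn2 addnK].
apply: (@LE_trans _ [:: (Cup a, i); (VCr a (~~ a), i); (Cup c, j.+2); (Cap (~~ a), i)]).
  have := @LE_ctx0 [:: (Cup c, j.+2); (VCr a (~~ a), i)] [:: (VCr a (~~ a), i); (Cup c, j.+2)]
    [:: (Cup a, i)] [:: (Cap (~~ a), i)].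
  apply => //; apply: LE_int_b => /=; [lia | lia].
have := @LE_ctx0 [:: (Cup c, j.+2); (Cap (~~ a), i)] [:: (Cap (~~ a), i); (Cup c, j)]
    [:: (Cup a, i); (VCr a (~~ a), i)] [::].
rewrite !cats0; apply => //; apply: LE_int_b => /=; [lia | lia].
Qed.

Lemma UC2 c a i j : j + 2 <= i ->
  LE ((Cup c, j) :: shift i (T a)) (shift (i - 2) (T a) ++ [:: (Cup c, j)]).
Proof.
move=> Hij; rewrite /shift /= !add0n.
apply: (@LE_trans _ [:: (Cup a, i - 2); (Cup c, j); (VCr a (~~ a), i); (Cap (~~ a), i)]).
  have := @LE_ctx0 [:: (Cup c, j); (Cup a, i)] [:: (Cup a, i - 2); (Cup c, j)] [::]
    [:: (VCr a (~~ a), i); (Cap (~~ a), i)].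
  apply => //; apply: LE_int_f => /=; [lia | lia].
apply: (@LE_trans _ [:: (Cup a, i - 2); (VCr a (~~ a), i - 2); (Cup c, j); (Cap (~~ a), i)]).
  have := @LE_ctx0 [:: (Cup c, j); (VCr a (~~ a), i)] [:: (VCr a (~~ a), i - 2); (Cup c, j)]
    [:: (Cup a, i - 2)] [:: (Cap (~~ a), i)].
  apply => //; apply: LE_int_f => /=; [lia | lia].
have := @LE_ctx0 [:: (Cup c, j); (Cap (~~ a), i)] [:: (Cap (~~ a), i - 2); (Cup c, j)]
    [:: (Cup a, i - 2); (VCr a (~~ a), i - 2)] [::].
rewrite !cats0; apply => //; apply: LE_int_f => /=; [lia | lia].
Qed.


Lemma LE_use0 x y p s : LE x y -> x <> [::] ->
  valid (p ++ x ++ s) -> cob (p ++ x ++ s) (p ++ y ++ s).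
Proof. by move=> H Hx; apply: (@LE_use' x y p s 0) => //; rewrite shift0. Qed.

Lemma T_shift_run w i a : i <= size w -> run w (shift i (T a)) = Some w.
Proof.
move=> Hi; apply/(@run_shiftP w i (T a) w Hi); exists (drop i w); split.
  exact: run_closed (T_closed a).
by rewrite cat_take_drop.
Qed.

Lemma cob_eqL A' A B : A = A' -> cob A' B -> cob A B.
Proof. by move=> ->. Qed.

Lemma unnest D : forall w i a, closure w D -> i <= size w ->
  cob (open D ++ shift i (T a) ++ D) (T true).
Proof.
elim: D => [|[g j] D1 IH] w i a HD Hi.
  case: HD => _ [Hw]; subst w; move: Hi; rewrite leqn0 => /eqP ->.
  rewrite shift0 open_nil /= ?cats0.
  have := @LE_use0 (T a) (T true) [::] [::] (T_any a).
  by rewrite !cats0; apply => //; exact: T_valid.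
have [c [w1 [Eg E HD1]]] := closure_cons HD; subst g.
move/apply_sliceP: (E) => [x [y [Hx Ew Ew1]]].
have Hsw : size w = size w1 + 2 by rewrite Ew Ew1 !size_cat /=; lia.
have Hj : j <= size w1 by rewrite Ew1 size_cat Hx; lia.
have Hw1 : run [::] (open D1) = Some w1 by apply: open_run (proj1 HD1) (proj2 HD1).
have E' : apply_slice w1 (Cup c, j) = Some w by apply/cup_cap.
have V : valid (open ((Cap c, j) :: D1) ++ shift i (T a) ++ (Cap c, j) :: D1).
  rewrite /valid run_cat (open_run (proj1 HD) (proj2 HD)) run_cat T_shift_run //.
  by case: HD.
rewrite open_cons /cupof /= in V *.
have HV2 : forall i', i' <= size w1 -> valid ((open D1 ++ shift i' (T a)) ++ [:: (Cup c, j); (Cap c, j)] ++ D1).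
  move=> i' Hi'; rewrite /valid run_cat run_cat Hw1 T_shift_run //=.
  by rewrite /= E' /= E; case: HD1.
case: (leqP i j) => Hij.
  apply: (@cob_eqL (open D1 ++ ((Cup c, j) :: shift i (T a)) ++ ((Cap c, j) :: D1))); first by rewrite -!catA.
  have V1 : valid (open D1 ++ ((Cup c, j) :: shift i (T a)) ++ ((Cap c, j) :: D1)) by move: V; rewrite -!catA.
  apply: (cob_trans (@LE_use0 _ _ (open D1) ((Cap c, j) :: D1) (UC1 c a Hij) (fun e => match e with erefl => I end) V1)).
  apply: (@cob_eqL ((open D1 ++ shift i (T a)) ++ [:: (Cup c, j); (Cap c, j)] ++ D1)); first by rewrite -!catA.
  apply: (cob_trans (@LE_use' _ _ _ D1 j _ [::] (LE_bc c) _ (erefl _) (erefl _) (HV2 i (leq_trans Hij Hj)))) => //.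
  rewrite -catA; exact: IH HD1 (leq_trans Hij Hj).
case: (leqP (j + 2) i) => Hij2.
  apply: (@cob_eqL (open D1 ++ ((Cup c, j) :: shift i (T a)) ++ ((Cap c, j) :: D1))); first by rewrite -!catA.
  have Hi2 : i - 2 <= size w1 by lia.
  have V1 : valid (open D1 ++ ((Cup c, j) :: shift i (T a)) ++ ((Cap c, j) :: D1)) by move: V; rewrite -!catA.
  apply: (cob_trans (@LE_use0 _ _ (open D1) ((Cap c, j) :: D1) (UC2 c a Hij2) (fun e => match e with erefl => I end) V1)).
  apply: (@cob_eqL ((open D1 ++ shift (i - 2) (T a)) ++ [:: (Cup c, j); (Cap c, j)] ++ D1)); first by rewrite -!catA.
  apply: (cob_trans (@LE_use' _ _ _ D1 j _ [::] (LE_bc c) _ (erefl _) (erefl _) (HV2 _ Hi2))) => //.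
  rewrite -catA; exact: IH HD1 Hi2.
have Eij : i = j.+1 by lia.
rewrite Eij in V *.
apply: (@cob_eqL (open D1 ++ ((Cup c, j) :: shift j.+1 (T a) ++ [:: (Cap c, j)]) ++ D1)); first by rewrite -!catA.
have HV3 : valid (open D1 ++ shift j (T true) ++ D1).
  by rewrite /valid run_cat Hw1 run_cat T_shift_run //; case: HD1.
have Ex : (Cup c, j) :: shift j.+1 (T a) ++ [:: (Cap c, j)] = shift j (Nd c a).
  by rewrite /Nd /shift /= !add0n !add1n.
have V3 : valid (open D1 ++ ((Cup c, j) :: shift j.+1 (T a) ++ [:: (Cap c, j)]) ++ D1).
  by move: V; rewrite -!catA.
apply: (cob_trans (@LE_use' _ _ _ D1 j _ (shift j (T true)) (Nd_ok c a) (fun e => match e with erefl => I end) Ex (erefl _) V3)).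
exact: IH HD1 Hj.
Qed.

Definition nonpar (s : slice) : bool :=
  match s.1 with Cr _ o1 o2 => o1 != o2 | VCr o1 o2 => o1 != o2 | _ => true end.

Lemma MD w0 D D' : closure w0 D -> closure w0 D' -> cob (open D ++ D') [::].
Proof. exact: (@meander (size D') w0 D D' erefl). Qed.

Lemma closure_indep' X w C C' : run [::] X = Some w -> closure w C -> closure w C' ->
  cob (X ++ C) (X ++ C').
Proof. move=> HX HC HC'; apply: (closure_indep HX HC HC'); exact: MD. Qed.



Lemma bc_open E w b i : closure w E -> i <= size w ->
  cob (open E ++ [:: (Cup b, i); (Cap b, i)] ++ E) [::].
Proof.
move=> HE Hi.
have Hw := open_run (proj1 HE) (proj2 HE).
have [w' Ew'] : exists w', apply_slice w (Cup b, i) = Some w'.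
  exists (take i w ++ [:: b; ~~ b] ++ drop i w); apply/apply_sliceP.
  exists (take i w), (drop i w); split => //; last by rewrite cat_take_drop.
  by rewrite size_take; case: ltnP => //; lia.
have V : valid (open E ++ [:: (Cup b, i); (Cap b, i)] ++ E).
  rewrite /valid run_cat Hw /= Ew' /=.
  by move/cup_cap: Ew' => -> /=; case: HE.
apply: (cob_trans (@LE_use' _ _ _ E i _ [::] (LE_bc b) (fun e => match e with erefl => I end) (erefl _) (erefl _) V)).
exact: OC HE.
Qed.

Lemma piece_ok w0 s w : apply_slice w0 s = Some w -> bal w0 -> nonpar s ->
  exists E C', [/\ closure w0 E, closure w C' &
    cob (open E ++ s :: C') (Tpow (count_virtual [:: s]))].
Proof.
case: s => g i Es Hb Hnp.
move/apply_sliceP: (Es) => [x [y [Hx Ew0 Ew]]].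
case: g Es Hnp Ew0 Ew => [b|b|k o1 o2|o1 o2] Es Hnp Ew0 Ew.
-
  have [E HE] := bal_closure (leqnn _) Hb.
  exists E, ((Cap b, i) :: E); split => //.
    split => //=; first by case: HE.
    by move/cup_cap: Es => -> /=; case: HE.
  apply: bc_open HE _.
  by rewrite Ew0 size_cat Hx leq_addr.
-
  have Hbw : bal w by rewrite -(bal_slice Es).
  have [C' HC'] := bal_closure (leqnn _) Hbw.
  exists ((Cap b, i) :: C'), C'; split => //.
    by split => //=; [case: HC' | rewrite Es; case: HC'].
  rewrite open_cons /cupof /= -catA /=.
  apply: bc_open HC' _.
  by rewrite Ew size_cat Hx leq_addr.
-
  have Eo : o2 = ~~ o1 by case: o1 o2 Hnp {Es Ew0 Ew} => [] [].
  subst o2.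
  have E1 : apply_slice w0 (Cap o1, i) = Some (x ++ y) by apply/apply_sliceP; exists x, y.
  have E2 : apply_slice w (Cap (~~ o1), i) = Some (x ++ y).
    by apply/apply_sliceP; exists x, y; rewrite Ew /= negbK.
  have Hbxy : bal (x ++ y) by rewrite -(bal_slice E1).
  have [D HD] := bal_closure (leqnn _) Hbxy.
  exists ((Cap o1, i) :: D), ((Cap (~~ o1), i) :: D); split.
  + by split => //=; [case: HD | rewrite E1; case: HD].
  + by split => //=; [case: HD | rewrite E2; case: HD].
  have V : valid (open ((Cap o1, i) :: D) ++ (Cr k o1 (~~ o1), i) :: (Cap (~~ o1), i) :: D).
    rewrite /valid run_cat (open_run (_ : all is_cap ((Cap o1, i) :: D)) (_ : run w0 _ = Some [::])).
    - by rewrite /= Es /= E2; case: HD.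
    - by case: HD.
    - by rewrite /= E1; case: HD.
  rewrite open_cons /cupof /= -catA /= in V *.
  have Ex : [:: (Cup o1, i); (Cr k o1 (~~ o1), i); (Cap (~~ o1), i)] = shift i (TC o1 k).
    by rewrite /TC /shift /= !add0n.
  apply: (cob_trans (@LE_use' _ _ (open D) D i _ [::] (TC_ok o1 k) (fun e => match e with erefl => I end) Ex (erefl _) V)).
  exact: OC HD.
-
  have Eo : o2 = ~~ o1 by case: o1 o2 Hnp {Es Ew0 Ew} => [] [].
  subst o2.
  have E1 : apply_slice w0 (Cap o1, i) = Some (x ++ y) by apply/apply_sliceP; exists x, y.
  have E2 : apply_slice w (Cap (~~ o1), i) = Some (x ++ y).
    by apply/apply_sliceP; exists x, y; rewrite Ew /= negbK.
  have Hbxy : bal (x ++ y) by rewrite -(bal_slice E1).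
  have [D HD] := bal_closure (leqnn _) Hbxy.
  exists ((Cap o1, i) :: D), ((Cap (~~ o1), i) :: D); split.
  + by split => //=; [case: HD | rewrite E1; case: HD].
  + by split => //=; [case: HD | rewrite E2; case: HD].
  rewrite open_cons /cupof /= -catA /=.
  have Ex : [:: (Cup o1, i), (VCr o1 (~~ o1), i), (Cap (~~ o1), i) & D] = shift i (T o1) ++ D.
    by rewrite /T /shift /= !add0n.
  rewrite Ex; apply: unnest HD _.
  by rewrite size_cat Hx leq_addr.
Qed.

Definition Claim (p : diagram) := forall w C, run [::] p = Some w -> closure w C ->
  cob (p ++ C) (Tpow (count_virtual p)).

Lemma run_rcons w p s : run w (rcons p s) =
  if run w p is Some w' then apply_slice w' s else None.
Proof.
rewrite -cats1 run_cat; case: (run w p) => // w'.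
by rewrite run_cons; case: (apply_slice w' s).
Qed.

Lemma Ext p s : Claim p -> nonpar s -> Claim (rcons p s).
Proof.
move=> IH Hs w C Hr HC.
move: Hr; rewrite run_rcons; case Hp: (run [::] p) => [w0|] // Es.
have Hb : bal w0 by rewrite -(bal_run Hp).
have [E [C' [HE HC' Hpiece]]] := piece_ok Es Hb Hs.
have Hr' : run [::] (rcons p s) = Some w by rewrite run_rcons Hp.
apply: (cob_trans (closure_indep' Hr' HC HC')).
rewrite -cats1 -catA /=.
have Hs' : run w0 (s :: C') = Some [::] by rewrite run_cons Es; case: HC'.
apply: (cob_trans (Sad Hp HE Hs')).
rewrite catA.
have V1 : valid (p ++ E) by rewrite /valid run_cat Hp; case: HE.
have V2 : valid (open E ++ s :: C') by rewrite /valid run_cat (open_run (proj1 HE) (proj2 HE)).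
apply: (cob_trans (cob_cat (IH _ _ Hp HE) Hpiece V1 V2)).
apply: (cob_trans (Tpow_cat _ _)).
by rewrite count_virtual_cat; exact: cob_refl.
Qed.

Lemma Claim_nil : Claim [::].
Proof.
move=> w C [<-] HC.
have := closure_size HC; rewrite /= => /esym /eqP; rewrite double_eq0 => /nilP ->.
exact: cob_refl.
Qed.

Lemma Claim_all p : Claim p.
Proof.
elim/last_ind: p => [|p s IH]; first exact: Claim_nil.
case Hs: (nonpar s); first exact: Ext.
case: s Hs => [g i] /=; rewrite /nonpar /=.
case: g => // [k o1 o2|o1 o2] /negbFE /eqP <- {o2}.
-
  have Hnp : nonpar (Cr (~~ k) o1 (~~ o1), i.+1) by rewrite /nonpar /=; case: o1.
  have C3 : Claim (rcons (rcons (rcons p (Cup (~~ o1), i.+2)) (Cr (~~ k) o1 (~~ o1), i.+1)) (Cap o1, i)).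
    apply: Ext => //; apply: Ext => //; exact: Ext.
  move=> w C Hr HC.
  move: (Hr); rewrite run_rcons; case Hp: (run [::] p) => [w0|] // Es.
  have Hi : i <= size w0.
    by move/apply_sliceP: Es => [x [y [Hx -> _]]]; rewrite size_cat Hx leq_addr.
  have Hrun : run w0 (shift i [:: (Cr k o1 o1, 0)]) = Some w by rewrite /shift /= add0n ?run_cons Es.
  have Hrun' := compat_shift (proj1 (ROTC k o1)) Hi Hrun.
  have Eq1 : rcons p (Cr k o1 o1, i) ++ C = p ++ shift i [:: (Cr k o1 o1, 0)] ++ C.
    by rewrite -cats1 -catA /shift /= add0n.
  have V : valid (p ++ shift i [:: (Cr k o1 o1, 0)] ++ C).
    by rewrite /valid run_cat Hp run_cat Hrun; case: HC.
  rewrite Eq1; apply: (cob_trans (LE_use (ROTC k o1) (fun e => match e with erefl => I end) V)).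
  have Eq2 : p ++ shift i [:: (Cup (~~ o1), 2); (Cr (~~ k) o1 (~~ o1), 1); (Cap o1, 0)] ++ C =
    rcons (rcons (rcons p (Cup (~~ o1), i.+2)) (Cr (~~ k) o1 (~~ o1), i.+1)) (Cap o1, i) ++ C.
    by rewrite -!cats1 -!catA /shift /= add0n.
  rewrite Eq2; apply: (cob_trans (C3 w C _ HC)).
    by move: Hrun'; rewrite -!cats1 -!catA run_cat Hp /shift /= add0n.
  by rewrite -!cats1 !count_virtual_cat /= !addn0; exact: cob_refl.
-
  have Hnp : nonpar (VCr o1 (~~ o1), i.+1) by rewrite /nonpar /=; case: o1.
  have C3 : Claim (rcons (rcons (rcons p (Cup (~~ o1), i.+2)) (VCr o1 (~~ o1), i.+1)) (Cap o1, i)).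
    apply: Ext => //; apply: Ext => //; exact: Ext.
  move=> w C Hr HC.
  move: (Hr); rewrite run_rcons; case Hp: (run [::] p) => [w0|] // Es.
  have Hi : i <= size w0.
    by move/apply_sliceP: Es => [x [y [Hx -> _]]]; rewrite size_cat Hx leq_addr.
  have Hrun : run w0 (shift i [:: (VCr o1 o1, 0)]) = Some w by rewrite /shift /= add0n ?run_cons Es.
  have Hrun' := compat_shift (proj1 (ROTV o1)) Hi Hrun.
  have Eq1 : rcons p (VCr o1 o1, i) ++ C = p ++ shift i [:: (VCr o1 o1, 0)] ++ C.
    by rewrite -cats1 -catA /shift /= add0n.
  have V : valid (p ++ shift i [:: (VCr o1 o1, 0)] ++ C).
    by rewrite /valid run_cat Hp run_cat Hrun; case: HC.
  rewrite Eq1; apply: (cob_trans (LE_use (ROTV o1) (fun e => match e with erefl => I end) V)).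
  have Eq2 : p ++ shift i [:: (Cup (~~ o1), 2); (VCr o1 (~~ o1), 1); (Cap o1, 0)] ++ C =
    rcons (rcons (rcons p (Cup (~~ o1), i.+2)) (VCr o1 (~~ o1), i.+1)) (Cap o1, i) ++ C.
    by rewrite -!cats1 -!catA /shift /= add0n.
  rewrite Eq2; apply: (cob_trans (C3 w C _ HC)).
    by move: Hrun'; rewrite -!cats1 -!catA run_cat Hp /shift /= add0n.
  by rewrite -!cats1 !count_virtual_cat /= !addn0; exact: cob_refl.
Qed.

Theorem mainTheorem2 (L : diagram) :
  valid L -> (bounds_rv_surface L <-> ~~ odd (count_virtual L)).
Proof.
move=> HL; split.
  by move=> /cob_parity ->.
move=> Hev.
have H := Claim_all HL (conj (erefl _ : all is_cap [::]) (erefl _ : run [::] [::] = Some [::])).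
rewrite cats0 /Tpow (negbTE Hev) in H.
exact: H.
Qed.
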